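(* Let $(\alpha,\theta)\in\Omega$ and let $\varphi,\beta,G,A,C$ and $g$ be as in the context. Up to a left translation of $\mathrm{Nil}_3$, the conformal minimal immersion $X=(F,h):\mathbb{C}\to\mathrm{Nil}_3$ whose Gauss map is $g$ is given by $$F(u+iv)=\frac{G'}{\alpha}\cos\varphi\sinh A-\frac{C}{\alpha}\sin\varphi\cosh A+i(Cv-G),$$ $$h(u+iv)=-\frac1\alpha\Big(G'\sin\varphi+\frac{C^2}{\alpha}\sin\varphi+\frac{(Cv-G)G'}{2}\cos\varphi\Big)\sinh A+\frac1\alpha\Big(-C\cos\varphi+\frac{CG'}{\alpha}\cos\varphi+\frac{C(Cv-G)}{2}\sin\varphi\Big)\cosh A.$$ Here $\varphi,G,G'$ are evaluated at $u$. The metric of $X$ is $ds^2=(G'^2+C^2)\cosh^2A\,|dz|^2$.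
   Context: $\mathrm{Nil}_3$ is $\mathbb{R}^3$ with the metric $dx_1^2+dx_2^2+\big(dx_3+\tfrac12(x_2dx_1-x_1dx_2)\big)^2$. A point is written $(F,h)$ with $F=x_1+ix_2\in\mathbb{C}$ and $h=x_3$. The left-invariant orthonormal frame is $E_1=\partial_{x_1}-\frac{x_2}{2}\partial_{x_3}$, $E_2=\partial_{x_2}+\frac{x_1}{2}\partial_{x_3}$, $E_3=\partial_{x_3}$. The Gauss map $g$ of an oriented conformal immersion with unit normal $N$ is defined by $N=\frac{1}{1+|g|^2}(2\,\mathrm{Re}\,g,\ 2\,\mathrm{Im}\,g,\ 1-|g|^2)$ in this frame. For $\alpha>0$ and $\theta\in\mathbb{R}$ let $C=\frac{\sin(2\theta)}{2\alpha}$ and $P_{\alpha,\theta}(x)=\alpha^2+\cos(2\theta)x^2-C^2x^4$. Let $\theta^+_\alpha=\pi/2$ if $\alpha>1$, and $\theta^+_\alpha=\frac12\arccos(1-2\alpha^2)$ if $\alpha\le1$. Set $\Omega=\{(\alpha,\theta):\alpha>0,|\theta|<\theta^+_\alpha\}$. Let $\varphi:\mathbb{R}\to\mathbb{R}$ solve $\varphi'^2=P_{\alpha,\theta}(\cos\varphi)$ with $\varphi(0)=0$ and $\varphi'(0)\le0$. Define $\beta'=C\cos^2\varphi$ with $\beta(0)=0$, and $G'=\frac{C^2\cos^2\varphi-\cos(2\theta)}{\alpha-\varphi'}$ with $G(0)=0$. For $z=u+iv$ put $A=\alpha v+\beta(u)$ and $g(u+iv)=\frac{\sin\varphi(u)+i\sinh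 A}{\cos\varphi(u)+\cosh A}$. *)

(* Defs.v *)
From Stdlib Require Import Reals Lra.
From Coquelicot Require Import Coquelicot.
Open Scope R_scope.

Definition Cconst (alpha theta : R) : R := sin (2 * theta) / (2 * alpha).

Definition Ppoly (alpha theta x : R) : R :=
  alpha ^ 2 + cos (2 * theta) * x ^ 2 - (Cconst alpha theta) ^ 2 * x ^ 4.

Definition theta_plus (alpha : R) : R :=
  if Rlt_dec 1 alpha then PI / 2 else / 2 * acos (1 - 2 * alpha ^ 2).

Definition in_Omega (alpha theta : R) : Prop :=
  0 < alpha /\ Rabs theta < theta_plus alpha.

(* Nil_3 = R^3 with coordinates (x1,x2,x3); F = x1 + i x2, h = x3.    *)

Definition vec3 : Type := (R * R * R)%type.
Definition c1 (p : vec3) : R := fst (fst p).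
Definition c2 (p : vec3) : R := snd (fst p).
Definition c3 (p : vec3) : R := snd p.

Definition dot3 (a b : vec3) : R := c1 a * c1 b + c2 a * c2 b + c3 a * c3 b.
Definition cross3 (a b : vec3) : vec3 :=
  (c2 a * c3 b - c3 a * c2 b, c3 a * c1 b - c1 a * c3 b, c1 a * c2 b - c2 a * c1 b).
Definition add3 (a b : vec3) : vec3 := (c1 a + c1 b, c2 a + c2 b, c3 a + c3 b).
Definition scal3 (k : R) (a : vec3) : vec3 := (k * c1 a, k * c2 a, k * c3 a).

(* Group law of Nil_3 (the metric dx1^2+dx2^2+(dx3+1/2(x2dx1-x1dx2))^2 and
   the frame E1,E2,E3 are left-invariant for it). *)
Definition nil_mul (p q : vec3) : vec3 :=
  (c1 p + c1 q, c2 p + c2 q, c3 p + c3 q + / 2 * (c1 p * c2 q - c2 p * c1 q)).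

(* Coordinates, in the orthonormal frame (E1,E2,E3) at the point p, of the
   tangent vector with Euclidean coordinate components d = (d1,d2,d3):
   d = d1 E1 + d2 E2 + (d3 + 1/2 (x2 d1 - x1 d2)) E3. *)
Definition frame_coords (p d : vec3) : vec3 :=
  (c1 d, c2 d, c3 d + / 2 * (c2 p * c1 d - c1 p * c2 d)).

(* Levi-Civita connection of Nil_3 on the frame: for a = sum a_i E_i,
   b = sum b_j E_j (constant coefficients), nabla_E a b = sum a_i b_j nabla_{E_i} E_j,
   with (Koszul formula, [E1,E2] = E3, other brackets 0)
     nabla_{E1}E2 =  1/2 E3, nabla_{E2}E1 = -1/2 E3,
     nabla_{E1}E3 = -1/2 E2, nabla_{E3}E1 = -1/2 E2,
     nabla_{E2}E3 =  1/2 E1, nabla_{E3}E2 =  1/2 E1,  nabla_{Ei}Ei = 0. *)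
Definition nabla_E (a b : vec3) : vec3 :=
  ( / 2 * (c2 a * c3 b + c3 a * c2 b),
    - / 2 * (c1 a * c3 b + c3 a * c1 b),
    / 2 * (c1 a * c2 b - c2 a * c1 b)).

Definition pd_u (f : R -> R -> R) : R -> R -> R :=
  fun u v => Derive (fun t => f t v) u.
Definition pd_v (f : R -> R -> R) : R -> R -> R :=
  fun u v => Derive (fun t => f u t) v.

Definition C1_2d (f : R -> R -> R) : Prop :=
  forall u v,
    ex_derive (fun t => f t v) u /\ ex_derive (fun t => f u t) v /\
    continuous (fun p : R * R => pd_u f (fst p) (snd p)) (u, v) /\
    continuous (fun p : R * R => pd_v f (fst p) (snd p)) (u, v).

Definition C2_2d (f : R -> R -> R) : Prop :=
  C1_2d f /\ C1_2d (pd_u f) /\ C1_2d (pd_v f).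

Definition comp1 (X : R -> R -> vec3) : R -> R -> R := fun u v => c1 (X u v).
Definition comp2 (X : R -> R -> vec3) : R -> R -> R := fun u v => c2 (X u v).
Definition comp3 (X : R -> R -> vec3) : R -> R -> R := fun u v => c3 (X u v).

Definition pd3_u (W : R -> R -> vec3) (u v : R) : vec3 :=
  (pd_u (comp1 W) u v, pd_u (comp2 W) u v, pd_u (comp3 W) u v).
Definition pd3_v (W : R -> R -> vec3) (u v : R) : vec3 :=
  (pd_v (comp1 W) u v, pd_v (comp2 W) u v, pd_v (comp3 W) u v).

Definition Xu (X : R -> R -> vec3) (u v : R) : vec3 := frame_coords (X u v) (pd3_u X u v).
Definition Xv (X : R -> R -> vec3) (u v : R) : vec3 := frame_coords (X u v) (pd3_v X u v).

(* Covariant derivatives (Levi-Civita of Nil_3) along the coordinate lines of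
   a vector field W along X given by its frame coordinates. *)
Definition cov_u (X : R -> R -> vec3) (W : R -> R -> vec3) (u v : R) : vec3 :=
  add3 (pd3_u W u v) (nabla_E (Xu X u v) (W u v)).
Definition cov_v (X : R -> R -> vec3) (W : R -> R -> vec3) (u v : R) : vec3 :=
  add3 (pd3_v W u v) (nabla_E (Xv X u v) (W u v)).

Definition immersion (X : R -> R -> vec3) : Prop :=
  C2_2d (comp1 X) /\ C2_2d (comp2 X) /\ C2_2d (comp3 X) /\
  forall u v s t, add3 (scal3 s (Xu X u v)) (scal3 t (Xv X u v)) = (0, 0, 0) ->
                  s = 0 /\ t = 0.

(* conformal: |X_u| = |X_v|, <X_u,X_v> = 0 for the Nil_3 metric;
   then ds^2 = lambda |dz|^2 with lambda = |X_u|^2. *)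
Definition conformal (X : R -> R -> vec3) : Prop :=
  forall u v, dot3 (Xu X u v) (Xu X u v) = dot3 (Xv X u v) (Xv X u v) /\
              dot3 (Xu X u v) (Xv X u v) = 0.

Definition conformal_factor (X : R -> R -> vec3) (u v : R) : R :=
  dot3 (Xu X u v) (Xu X u v).

(* unit normal of the oriented surface (C with its standard orientation,
   Nil_3 oriented by (E1,E2,E3)): N = X_u x X_v / |X_u x X_v|, frame coords. *)
Definition unit_normal (X : R -> R -> vec3) (u v : R) : vec3 :=
  let n := cross3 (Xu X u v) (Xv X u v) in scal3 (/ sqrt (dot3 n n)) n.

Definition mean_curvature (X : R -> R -> vec3) (u v : R) : R :=
  (dot3 (cov_u X (Xu X) u v) (unit_normal X u v)
   + dot3 (cov_v X (Xv X) u v) (unit_normal X u v)) / (2 * conformal_factor X u v).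

Definition conformal_minimal_immersion (X : R -> R -> vec3) : Prop :=
  immersion X /\ conformal X /\ forall u v, mean_curvature X u v = 0.

Definition stereo (a b : R) : vec3 :=
  let q := 1 + a ^ 2 + b ^ 2 in (2 * a / q, 2 * b / q, (1 - a ^ 2 - b ^ 2) / q).

Definition gauss_map_on (D : R -> R -> Prop) (X : R -> R -> vec3)
    (gre gim : R -> R -> R) : Prop :=
  forall u v, D u v -> unit_normal X u v = stereo (gre u v) (gim u v).

Section Data.
Variables (alpha theta : R) (phi beta G : R -> R).

Definition Aof (u v : R) : R := alpha * v + beta u.

Definition g_den (u v : R) : R := cos (phi u) + cosh (Aof u v).
Definition g_re (u v : R) : R := sin (phi u) / g_den u v.
Definition g_im (u v : R) : R := sinh (Aof u v) / g_den u v.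

Definition F_re (u v : R) : R :=
  let C := Cconst alpha theta in let Gp := Derive G u in let A := Aof u v in
  Gp / alpha * cos (phi u) * sinh A - C / alpha * sin (phi u) * cosh A.
Definition F_im (u v : R) : R :=
  Cconst alpha theta * v - G u.
Definition h_fun (u v : R) : R :=
  let C := Cconst alpha theta in let Gp := Derive G u in let A := Aof u v in
  - / alpha * (Gp * sin (phi u) + C ^ 2 / alpha * sin (phi u)
               + (C * v - G u) * Gp / 2 * cos (phi u)) * sinh A
  + / alpha * (- C * cos (phi u) + C * Gp / alpha * cos (phi u)
               + C * (C * v - G u) / 2 * sin (phi u)) * cosh A.

Definition X_explicit (u v : R) : vec3 := (F_re u v, F_im u v, h_fun u v).

End Data.

(* Main.v *)
Require Import Defs.
From Stdlib Require Import Reals.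
From Coquelicot Require Import Coquelicot.
From Stdlib Require Import Lra Nsatz FunctionalExtensionality.
Import Defs.
Open Scope R_scope.

Lemma isd_plus (f g : R -> R) x a b :
  is_derive f x a -> is_derive g x b -> is_derive (fun t => f t + g t) x (a + b).
Proof. intros; apply (is_derive_plus f g); auto. Qed.
Lemma isd_mult (f g : R -> R) x a b :
  is_derive f x a -> is_derive g x b -> is_derive (fun t => f t * g t) x (a * g x + f x * b).
Proof. intros. apply (is_derive_mult f g); auto. intros; apply Rmult_comm. Qed.
Lemma isd_opp (f : R -> R) x a : is_derive f x a -> is_derive (fun t => - f t) x (- a).
Proof. intros; apply (is_derive_opp f); auto. Qed.
Lemma isd_comp (h f : R -> R) x a b :
  is_derive h (f x) a -> is_derive f x b -> is_derive (fun t => h (f t)) x (b * a).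
Proof. intros; apply (is_derive_comp h f); auto. Qed.
Lemma isd_const (c x : R) : is_derive (fun _ : R => c) x 0.
Proof. apply (is_derive_const c). Qed.
Lemma isd_id (x : R) : is_derive (fun t : R => t) x 1.
Proof. apply (is_derive_id x). Qed.
Lemma isd_ext (f g : R -> R) x a b : (forall t, f t = g t) -> a = b -> is_derive f x a -> is_derive g x b.
Proof. intros H -> H1. apply (is_derive_ext f g); auto. Qed.
Lemma isd_sinh x : is_derive sinh x (cosh x).
Proof. apply is_derive_Reals, derivable_pt_lim_sinh. Qed.
Lemma isd_cosh x : is_derive cosh x (sinh x).
Proof. apply is_derive_Reals, derivable_pt_lim_cosh. Qed.
Lemma isd_cont (f : R -> R) x a : is_derive f x a -> continuity_pt f x.
Proof. intro H. apply is_derive_Reals in H.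
  apply derivable_continuous_pt. exists a. exact H. Qed.

Fixpoint T (n : nat) (f : R -> R) : Prop :=
  match n with
  | O => forall x, continuity_pt f x
  | S m => (forall x, continuity_pt f x) /\
           exists f', (forall x, is_derive f x (f' x)) /\ T m f'
  end.

Lemma T_cont n f : T n f -> forall x, continuity_pt f x.
Proof. destruct n; simpl; tauto. Qed.

Lemma T_mono n f : T (S n) f -> T n f.
Proof. revert f; induction n; intros f [Hc [f' [Hd Hf']]]; simpl; auto.
  split; auto. exists f'; split; auto. Qed.

Lemma T_ext n f g : (forall x, f x = g x) -> T n f -> T n g.
Proof. intros E. replace g with f; auto. extensionality x; auto. Qed.

Lemma T_const n c : T n (fun _ => c).
Proof. revert c; induction n; intro c; simpl.
  - intros; apply continuity_pt_const; intros ? ?; auto.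
  - split. intros; apply continuity_pt_const; intros ? ?; auto.
    exists (fun _ => 0); split; auto. intros; apply isd_const. Qed.

Lemma T_id n : T n (fun x => x).
Proof. destruct n; simpl.
  - intros; apply continuity_pt_id.
  - split. intros; apply continuity_pt_id.
    exists (fun _ => 1); split; [intros; apply isd_id | apply T_const]. Qed.

Lemma T_plus n f g : T n f -> T n g -> T n (fun x => f x + g x).
Proof. revert f g; induction n; simpl.
  - intros f g Hf Hg x. apply (continuity_pt_plus f g); auto.
  - intros f g [Hf [f' [Hf1 Hf2]]] [Hg [g' [Hg1 Hg2]]]. split.
    intros x; apply (continuity_pt_plus f g); auto.
    exists (fun x => f' x + g' x); split; auto. intros; apply isd_plus; auto. Qed.

Lemma T_opp n f : T n f -> T n (fun x => - f x).
Proof. revert f; induction n; simpl.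
  - intros f Hf x. apply (continuity_pt_opp f); auto.
  - intros f [Hf [f' [Hf1 Hf2]]]. split.
    intros x; apply (continuity_pt_opp f); auto.
    exists (fun x => - f' x); split; auto. intros; apply isd_opp; auto. Qed.

Lemma T_mult n f g : T n f -> T n g -> T n (fun x => f x * g x).
Proof. revert f g; induction n; simpl.
  - intros f g Hf Hg x. apply (continuity_pt_mult f g); auto.
  - intros f g Hf Hg. pose proof Hf as [Hfc [f' [Hf1 Hf2]]]. pose proof Hg as [Hgc [g' [Hg1 Hg2]]]. split.
    intros x; apply (continuity_pt_mult f g); auto.
    exists (fun x => f' x * g x + f x * g' x); split.
    intros; apply isd_mult; auto.
    apply T_plus; apply IHn; auto; apply T_mono; simpl; eauto. Qed.

Lemma T_comp n h f : T n h -> T n f -> T n (fun x => h (f x)).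
Proof. revert h f; induction n; simpl.
  - intros h f Hh Hf x. apply (continuity_pt_comp f h); auto.
  - intros h f [Hhc [h' [Hh1 Hh2]]] Hf. pose proof Hf as [Hfc [f' [Hf1 Hf2]]]. split.
    intros x; apply (continuity_pt_comp f h); auto.
    exists (fun x => f' x * h' (f x)); split.
    intros; apply isd_comp; auto.
    apply T_mult; auto. apply IHn; auto. apply T_mono; simpl; eauto. Qed.

Lemma T_inv n f : T n f -> (forall x, f x <> 0) -> T n (fun x => / f x).
Proof. revert f; induction n; simpl.
  - intros f Hf Hnz x. apply (continuity_pt_inv f); auto.
  - intros f Hf Hnz. pose proof Hf as [Hfc [f' [Hf1 Hf2]]]. split.
    intros x; apply (continuity_pt_inv f); auto.
    exists (fun x => - f' x * (/ f x * / f x)); split.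
    intros x. apply (isd_ext (fun y => / f y) _ x (- f' x / f x ^ 2)).
    intros; reflexivity. assert (E : forall a b : R, b<>0 -> -a / b^2 = -a*(/b*/b)) by (intros; field; auto). apply E; auto. apply is_derive_inv; auto.
    apply T_mult. apply T_opp; auto. apply T_mult; apply IHn; auto; apply T_mono; simpl; eauto. Qed.

Lemma T_sqrt n f : T n f -> (forall x, 0 < f x) -> T n (fun x => sqrt (f x)).
Proof. revert f; induction n; simpl.
  - intros f Hf Hp x. apply (continuity_pt_comp f sqrt); auto. apply continuity_pt_sqrt. left; auto.
  - intros f Hf Hp. pose proof Hf as [Hfc [f' [Hf1 Hf2]]]. split.
    intros x; apply (continuity_pt_comp f sqrt); auto. apply continuity_pt_sqrt. left; auto.
    exists (fun x => f' x * / (2 * sqrt (f x))); split.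
    intros x. apply (isd_ext (fun y => sqrt (f y)) _ x (f' x / (2 * sqrt (f x)))); [intros; reflexivity| reflexivity |apply is_derive_sqrt; auto].
    apply T_mult; auto. apply T_inv.
    apply T_mult. apply T_const. apply IHn; auto. apply T_mono; simpl; eauto.
    intros x. apply Rmult_integral_contrapositive; split; [lra|]. apply Rgt_not_eq, sqrt_lt_R0; auto. Qed.

Lemma T_sincos n : T n sin /\ T n cos.
Proof. induction n; simpl.
  - split; intros; [apply continuity_sin | apply continuity_cos].
  - destruct IHn as [H1 H2]. split; split.
    intros; apply continuity_sin. exists cos; split; auto. intros; apply is_derive_sin.
    intros; apply continuity_cos. exists (fun x => - sin x); split. intros; apply is_derive_cos.
    apply T_opp; auto. Qed.

Lemma T_sinhcosh n : T n sinh /\ T n cosh.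
Proof. induction n; simpl.
  - split; intros x; eapply isd_cont; [apply isd_sinh | apply isd_cosh].
  - destruct IHn as [H1 H2]. split; split.
    intros x; eapply isd_cont; apply isd_sinh. exists cosh; split; auto. intros; apply isd_sinh.
    intros x; eapply isd_cont; apply isd_cosh. exists sinh; split; auto. intros; apply isd_cosh. Qed.

Ltac split4 := split; [|split; [|split]].
Fixpoint S2 (n : nat) (f : R -> R -> R) : Prop :=
  match n with
  | O => forall u v, continuity_2d_pt f u v
  | S m => (forall u v, continuity_2d_pt f u v) /\
           exists fu fv, (forall u v, is_derive (fun t => f t v) u (fu u v)) /\
                         (forall u v, is_derive (fun t => f u t) v (fv u v)) /\
                         S2 m fu /\ S2 m fv
  end.

Lemma S2_cont n f : S2 n f -> forall u v, continuity_2d_pt f u v.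
Proof. destruct n; simpl; tauto. Qed.

Lemma S2_mono n f : S2 (S n) f -> S2 n f.
Proof. revert f; induction n; intros f [Hc [fu [fv [H1 [H2 [H3 H4]]]]]].
  - exact Hc.
  - split; [exact Hc|]. exists fu, fv; split4; auto. Qed.

Lemma S2_ext n f g : (forall u v, f u v = g u v) -> S2 n f -> S2 n g.
Proof. intros E. replace g with f; auto. extensionality x; extensionality y; auto. Qed.

Lemma S2_const n c : S2 n (fun _ _ => c).
Proof. revert c; induction n; intro c; simpl.
  - intros; apply continuity_2d_pt_const.
  - split. intros; apply continuity_2d_pt_const.
    exists (fun _ _ => 0), (fun _ _ => 0); split4; auto; intros; apply isd_const. Qed.

Lemma S2_v n : S2 n (fun _ v => v).
Proof. destruct n; simpl.
  - intros; apply continuity_2d_pt_id2.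
  - split. intros; apply continuity_2d_pt_id2.
    exists (fun _ _ => 0), (fun _ _ => 1); split4; try apply S2_const; intros.
    apply isd_const. apply isd_id. Qed.

Lemma S2_lift n h : T n h -> S2 n (fun u _ => h u).
Proof. revert h; induction n; simpl.
  - intros h Hh u v. apply (continuity_1d_2d_pt_comp h (fun u _ => u)); auto.
    apply continuity_2d_pt_id1.
  - intros h [Hc [h' [Hd Hh']]]. split.
    intros u v. apply (continuity_1d_2d_pt_comp h (fun u _ => u)); auto.
    apply continuity_2d_pt_id1.
    exists (fun u _ => h' u), (fun _ _ => 0); split4; auto; try apply S2_const.
    intros; apply isd_const. Qed.

Lemma S2_plus n f g : S2 n f -> S2 n g -> S2 n (fun u v => f u v + g u v).
Proof. revert f g; induction n; simpl.
  - intros f g Hf Hg u v. apply continuity_2d_pt_plus; auto.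
  - intros f g [Hf [fu [fv [F1 [F2 [F3 F4]]]]]] [Hg [gu [gv [G1 [G2 [G3 G4]]]]]]. split.
    intros; apply continuity_2d_pt_plus; auto.
    exists (fun u v => fu u v + gu u v), (fun u v => fv u v + gv u v); split4; auto;
    intros; apply isd_plus; auto. Qed.

Lemma S2_opp n f : S2 n f -> S2 n (fun u v => - f u v).
Proof. revert f; induction n; simpl.
  - intros f Hf u v. apply continuity_2d_pt_opp; auto.
  - intros f [Hf [fu [fv [F1 [F2 [F3 F4]]]]]]. split.
    intros; apply continuity_2d_pt_opp; auto.
    exists (fun u v => - fu u v), (fun u v => - fv u v); split4; auto;
    intros; apply isd_opp; auto. Qed.

Lemma S2_mult n f g : S2 n f -> S2 n g -> S2 n (fun u v => f u v * g u v).
Proof. revert f g; induction n; simpl.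
  - intros f g Hf Hg u v. apply continuity_2d_pt_mult; auto.
  - intros f g Hf Hg. pose proof Hf as [Hfc [fu [fv [F1 [F2 [F3 F4]]]]]].
    pose proof Hg as [Hgc [gu [gv [G1 [G2 [G3 G4]]]]]]. split.
    intros; apply continuity_2d_pt_mult; auto.
    exists (fun u v => fu u v * g u v + f u v * gu u v), (fun u v => fv u v * g u v + f u v * gv u v);
    split4.
    intros u v; apply (isd_mult (fun t => f t v) (fun t => g t v)); auto.
    intros u v; apply (isd_mult (fun t => f u t) (fun t => g u t)); auto.
    apply S2_plus; apply IHn; auto; apply S2_mono; auto.
    apply S2_plus; apply IHn; auto; apply S2_mono; auto. Qed.

Lemma S2_comp n h f : T n h -> S2 n f -> S2 n (fun u v => h (f u v)).
Proof. revert h f; induction n; simpl.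
  - intros h f Hh Hf u v. apply continuity_1d_2d_pt_comp; auto.
  - intros h f [Hhc [h' [Hh1 Hh2]]] Hf. pose proof Hf as [Hfc [fu [fv [F1 [F2 [F3 F4]]]]]]. split.
    intros; apply continuity_1d_2d_pt_comp; auto.
    exists (fun u v => fu u v * h' (f u v)), (fun u v => fv u v * h' (f u v)); split4.
    intros u v; apply (isd_comp h (fun t => f t v)); auto.
    intros u v; apply (isd_comp h (fun t => f u t)); auto.
    apply S2_mult; auto; apply IHn; auto; apply S2_mono; auto.
    apply S2_mult; auto; apply IHn; auto; apply S2_mono; auto. Qed.

Ltac fixeq := match goal with |- @eq _ ?a ?b => change (@eq R a b) end.

Lemma T_minus n f g : T n f -> T n g -> T n (fun x => f x - g x).
Proof. intros; apply (T_ext n (fun x => f x + - g x)); [intros; ring|]. apply T_plus; auto. apply T_opp; auto. Qed.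
Lemma T_divc n f c : T n f -> T n (fun x => f x / c).
Proof. intros; apply (T_ext n (fun x => f x * (fun _ => / c) x)); [intros; reflexivity|]. apply T_mult; auto. apply T_const. Qed.
Lemma T_pow n f m : T n f -> T n (fun x => f x ^ m).
Proof. intros Hf; induction m; simpl. apply T_const. apply T_mult; auto. Qed.

Lemma S2_minus n f g : S2 n f -> S2 n g -> S2 n (fun u v => f u v - g u v).
Proof. intros; apply (S2_ext n (fun u v => f u v + - g u v)); [intros; ring|]. apply S2_plus; auto. apply S2_opp; auto. Qed.
Lemma S2_divc n f c : S2 n f -> S2 n (fun u v => f u v / c).
Proof. intros; apply (S2_ext n (fun u v => f u v * (fun _ _ => / c) u v)); [intros; reflexivity|]. apply S2_mult; auto. apply S2_const. Qed.
Lemma S2_pow n f m : S2 n f -> S2 n (fun u v => f u v ^ m).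
Proof. intros Hf; induction m; simpl. apply S2_const. apply S2_mult; auto. Qed.
Lemma S2_sinh n f : S2 n f -> S2 n (fun u v => sinh (f u v)).
Proof. intros; apply S2_comp; auto. apply T_sinhcosh. Qed.
Lemma S2_cosh n f : S2 n f -> S2 n (fun u v => cosh (f u v)).
Proof. intros; apply S2_comp; auto. apply T_sinhcosh. Qed.

Ltac tstep := match goal with
 | |- T _ (fun x => ?c) => apply T_const
 | |- T _ (fun x => x) => apply T_id
 | |- T _ (fun x => @?f x + @?g x) => apply (T_plus _ f g)
 | |- T _ (fun x => @?f x - @?g x) => apply (T_minus _ f g)
 | |- T _ (fun x => @?f x * @?g x) => apply (T_mult _ f g)
 | |- T _ (fun x => - @?f x) => apply (T_opp _ f)
 | |- T _ (fun x => @?f x / ?c) => apply (T_divc _ f c)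
 | |- T _ (fun x => @?f x ^ ?m) => apply (T_pow _ f m)
 end.
Ltac sstep := match goal with
 | |- S2 _ (fun u v => ?c) => apply S2_const
 | |- S2 _ (fun u v => v) => apply S2_v
 | |- S2 _ (fun u v => @?h u) => apply (S2_lift _ h)
 | |- S2 _ (fun u v => @?f u v + @?g u v) => apply (S2_plus _ f g)
 | |- S2 _ (fun u v => @?f u v - @?g u v) => apply (S2_minus _ f g)
 | |- S2 _ (fun u v => @?f u v * @?g u v) => apply (S2_mult _ f g)
 | |- S2 _ (fun u v => - @?f u v) => apply (S2_opp _ f)
 | |- S2 _ (fun u v => @?f u v / ?c) => apply (S2_divc _ f c)
 | |- S2 _ (fun u v => @?f u v ^ ?m) => apply (S2_pow _ f m)
 | |- S2 _ (fun u v => sinh (@?f u v)) => apply (S2_sinh _ f)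
 | |- S2 _ (fun u v => cosh (@?f u v)) => apply (S2_cosh _ f)
 end.

Lemma min_deriv_right f x l b : derivable_pt_lim f x l -> x < b ->
  (forall y, x <= y <= b -> f x <= f y) -> 0 <= l.
Proof.
  intros Hd Hxb Hm. destruct (Rle_or_lt 0 l) as [|Hl]; auto. exfalso.
  destruct (Hd (- l) ltac:(lra)) as [d Hdel].
  set (h := Rmin (d/2) (b - x)).
  assert (Hh0 : 0 < h) by (unfold h; apply Rmin_glb_lt; [destruct d; simpl; lra|lra]).
  assert (Hh1 : h <= d/2) by apply Rmin_l.
  assert (Hh2 : h <= b - x) by apply Rmin_r.
  assert (Hq := Hdel h ltac:(lra) ltac:(rewrite Rabs_pos_eq; destruct d; simpl in *; lra)).
  assert (Hge : 0 <= (f (x + h) - f x) / h).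
  { apply Rdiv_le_0_compat; auto. specialize (Hm (x+h) ltac:(lra)). lra. }
  apply Rabs_def2 in Hq. lra.
Qed.

Lemma min_deriv_left f x l a : derivable_pt_lim f x l -> a < x ->
  (forall y, a <= y <= x -> f x <= f y) -> l <= 0.
Proof.
  intros Hd Hxb Hm. destruct (Rle_or_lt l 0) as [|Hl]; auto. exfalso.
  destruct (Hd l ltac:(lra)) as [d Hdel].
  set (h := Rmin (d/2) (x - a)).
  assert (Hh0 : 0 < h) by (unfold h; apply Rmin_glb_lt; [destruct d; simpl; lra|lra]).
  assert (Hh1 : h <= d/2) by apply Rmin_l.
  assert (Hh2 : h <= x - a) by apply Rmin_r.
  assert (Hq := Hdel (-h) ltac:(lra) ltac:(rewrite Rabs_Ropp, Rabs_pos_eq; destruct d; simpl in *; lra)).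
  assert (Hge : (f (x + - h) - f x) / (- h) <= 0).
  { unfold Rdiv. rewrite <- Ropp_inv_permute by lra.
    specialize (Hm (x + - h) ltac:(lra)).
    assert (0 < / h) by (apply Rinv_0_lt_compat; lra). nra. }
  apply Rabs_def2 in Hq. lra.
Qed.

Lemma darboux_core (f : R -> R) a b : a < b -> (forall x, ex_derive f x) ->
  Derive f a < 0 -> 0 < Derive f b -> exists c, Derive f c = 0.
Proof.
  intros Hab Hd Ha Hb.
  assert (Hdl : forall x, derivable_pt_lim f x (Derive f x)).
  { intros x; apply is_derive_Reals, Derive_correct, Hd. }
  destruct (continuity_ab_min f a b ltac:(lra)) as [m [Hm Hmab]].
  { intros c _. apply derivable_continuous_pt. exists (Derive f c). apply Hdl. }
  exists m.
  destruct (Req_dec m a) as [->|Hma].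
  { exfalso. assert (0 <= Derive f a); [|lra].
    apply (min_deriv_right f a _ b); auto. }
  destruct (Req_dec m b) as [->|Hmb].
  { exfalso. assert (Derive f b <= 0); [|lra].
    apply (min_deriv_left f b _ a); auto; try (intros y Hy; apply Hm; lra). }
  apply Rle_antisym.
  - apply (min_deriv_left f m _ a); auto; try lra; try (intros y Hy; apply Hm; lra).
  - apply (min_deriv_right f m _ b); auto; try lra; try (intros y Hy; apply Hm; lra).
Qed.

Lemma deriv_sign_const (f : R -> R) : (forall x, ex_derive f x) ->
  (forall x, Derive f x <> 0) -> Derive f 0 <= 0 -> forall x, Derive f x < 0.
Proof.
  intros Hd Hnz H0 x.
  assert (H0' : Derive f 0 < 0) by (destruct H0; auto; exfalso; apply (Hnz 0); auto).
  destruct (Rlt_or_le (Derive f x) 0) as [|Hx]; auto. exfalso.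
  assert (Hx' : 0 < Derive f x) by (destruct Hx; auto; exfalso; apply (Hnz x); auto).
  destruct (Rtotal_order 0 x) as [Hlt|[Heq|Hgt]].
  - destruct (darboux_core f 0 x Hlt Hd H0' Hx') as [c Hc]. apply (Hnz c Hc).
  - subst; lra.
  - assert (Hd' : forall y, ex_derive (fun t => - f t) y).
    { intros y. destruct (Hd y) as [l Hl]. exists (- l). apply isd_opp; auto. }
    assert (E : forall y, Derive (fun t => - f t) y = - Derive f y).
    { intros y. apply Derive_opp. }
    destruct (darboux_core (fun t => - f t) x 0 Hgt Hd') as [c Hc].
    rewrite E; lra. rewrite E; lra.
    rewrite E in Hc. apply (Hnz c); lra.
Qed.

Lemma exd_plus (f g : R -> R) x : ex_derive f x -> ex_derive g x -> ex_derive (fun t => f t + g t) x.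
Proof. intros [a Ha] [b Hb]. exists (a + b). apply isd_plus; auto. Qed.
Lemma exd_minus (f g : R -> R) x : ex_derive f x -> ex_derive g x -> ex_derive (fun t => f t - g t) x.
Proof. intros [a Ha] [b Hb]. exists (a + - b). apply (isd_ext (fun t => f t + - g t) _ x (a + - b)). intros; ring. reflexivity.
  apply isd_plus; auto. apply isd_opp; auto. Qed.
Lemma exd_mult (f g : R -> R) x : ex_derive f x -> ex_derive g x -> ex_derive (fun t => f t * g t) x.
Proof. intros [a Ha] [b Hb]. eexists. apply isd_mult; eauto. Qed.
Lemma exd_const (c x : R) : ex_derive (fun _ => c) x.
Proof. exists 0. apply isd_const. Qed.

Lemma locally_R (x d : R) (P : R -> Prop) : 0 < d -> (forall t, Rabs (t - x) < d -> P t) -> locally x P.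
Proof. intros Hd H. exists (mkposreal d Hd). intros y Hy. apply H. exact Hy. Qed.

Lemma dot3_exp (a b : vec3) : dot3 a b = c1 a * c1 b + c2 a * c2 b + c3 a * c3 b.
Proof. reflexivity. Qed.

Lemma conv_u (W N : R -> R -> vec3) u v d :
  ex_derive (fun t => c1 (W t v)) u -> ex_derive (fun t => c2 (W t v)) u -> ex_derive (fun t => c3 (W t v)) u ->
  ex_derive (fun t => c1 (N t v)) u -> ex_derive (fun t => c2 (N t v)) u -> ex_derive (fun t => c3 (N t v)) u ->
  0 < d -> (forall t, Rabs (t - u) < d -> dot3 (W t v) (N t v) = 0) ->
  dot3 (pd3_u W u v) (N u v) + dot3 (W u v) (pd3_u N u v) = 0.
Proof.
  intros W1 W2 W3 N1 N2 N3 Hd Hz.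
  set (f := fun t => c1 (W t v) * c1 (N t v) + c2 (W t v) * c2 (N t v) + c3 (W t v) * c3 (N t v)).
  assert (H1 : is_derive f u
     ((Derive (fun t => c1 (W t v)) u * c1 (N u v) + c1 (W u v) * Derive (fun t => c1 (N t v)) u)
    + (Derive (fun t => c2 (W t v)) u * c2 (N u v) + c2 (W u v) * Derive (fun t => c2 (N t v)) u)
    + (Derive (fun t => c3 (W t v)) u * c3 (N u v) + c3 (W u v) * Derive (fun t => c3 (N t v)) u))).
  { unfold f. apply (isd_plus (fun t => c1 (W t v) * c1 (N t v) + c2 (W t v) * c2 (N t v))).
    apply (isd_plus (fun t => c1 (W t v) * c1 (N t v))).
    all: apply (isd_mult (fun t => _ (W t v)) (fun t => _ (N t v))); apply Derive_correct; auto. }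
  assert (H0 : is_derive f u 0).
  { apply (is_derive_ext_loc (fun _ => 0)). apply (locally_R u d); auto.
    intros t Ht. unfold f. rewrite <- dot3_exp. symmetry. apply Hz; auto. apply isd_const. }
  apply is_derive_unique in H1. apply is_derive_unique in H0. rewrite H0 in H1.
  unfold pd3_u, pd_u, comp1, comp2, comp3, dot3, c1, c2, c3 in *; simpl in *. lra.
Qed.

Lemma conv_v (W N : R -> R -> vec3) u v d :
  ex_derive (fun t => c1 (W u t)) v -> ex_derive (fun t => c2 (W u t)) v -> ex_derive (fun t => c3 (W u t)) v ->
  ex_derive (fun t => c1 (N u t)) v -> ex_derive (fun t => c2 (N u t)) v -> ex_derive (fun t => c3 (N u t)) v ->
  0 < d -> (forall t, Rabs (t - v) < d -> dot3 (W u t) (N u t) = 0) ->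
  dot3 (pd3_v W u v) (N u v) + dot3 (W u v) (pd3_v N u v) = 0.
Proof.
  intros W1 W2 W3 N1 N2 N3 Hd Hz.
  set (f := fun t => c1 (W u t) * c1 (N u t) + c2 (W u t) * c2 (N u t) + c3 (W u t) * c3 (N u t)).
  assert (H1 : is_derive f v
     ((Derive (fun t => c1 (W u t)) v * c1 (N u v) + c1 (W u v) * Derive (fun t => c1 (N u t)) v)
    + (Derive (fun t => c2 (W u t)) v * c2 (N u v) + c2 (W u v) * Derive (fun t => c2 (N u t)) v)
    + (Derive (fun t => c3 (W u t)) v * c3 (N u v) + c3 (W u v) * Derive (fun t => c3 (N u t)) v))).
  { unfold f. apply (isd_plus (fun t => c1 (W u t) * c1 (N u t) + c2 (W u t) * c2 (N u t))).
    apply (isd_plus (fun t => c1 (W u t) * c1 (N u t))).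
    all: apply (isd_mult (fun t => _ (W u t)) (fun t => _ (N u t))); apply Derive_correct; auto. }
  assert (H0 : is_derive f v 0).
  { apply (is_derive_ext_loc (fun _ => 0)). apply (locally_R v d); auto.
    intros t Ht. unfold f. rewrite <- dot3_exp. symmetry. apply Hz; auto. apply isd_const. }
  apply is_derive_unique in H1. apply is_derive_unique in H0. rewrite H0 in H1.
  unfold pd3_v, pd_v, comp1, comp2, comp3, dot3, c1, c2, c3 in *; simpl in *. lra.
Qed.

Definition Zc2 (Z : R -> R -> vec3) := C2_2d (comp1 Z) /\ C2_2d (comp2 Z) /\ C2_2d (comp3 Z).

Section Zsec.
Variable Z : R -> R -> vec3.
Hypothesis HZ : Zc2 Z.

Lemma exC2 f : C2_2d f -> forall u v,
  ex_derive (fun t => f t v) u /\ ex_derive (fun t => f u t) v /\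
  ex_derive (fun t => pd_u f t v) u /\ ex_derive (fun t => pd_u f u t) v /\
  ex_derive (fun t => pd_v f t v) u /\ ex_derive (fun t => pd_v f u t) v.
Proof.
  intros [H1 [H2 H3]] u v. destruct (H1 u v) as [A1 [A2 _]]. destruct (H2 u v) as [B1 [B2 _]].
  destruct (H3 u v) as [C1 [C2 _]]. auto 10.
Qed.

Lemma exu f (H : C2_2d f) u v : ex_derive (fun t => f t v) u. Proof. apply (exC2 f H u v). Qed.
Lemma exv f (H : C2_2d f) u v : ex_derive (fun t => f u t) v. Proof. apply (exC2 f H u v). Qed.
Lemma exuu f (H : C2_2d f) u v : ex_derive (fun t => pd_u f t v) u. Proof. apply (exC2 f H u v). Qed.
Lemma exuv f (H : C2_2d f) u v : ex_derive (fun t => pd_u f u t) v. Proof. apply (exC2 f H u v). Qed.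
Lemma exvu f (H : C2_2d f) u v : ex_derive (fun t => pd_v f t v) u. Proof. apply (exC2 f H u v). Qed.
Lemma exvv f (H : C2_2d f) u v : ex_derive (fun t => pd_v f u t) v. Proof. apply (exC2 f H u v). Qed.

Lemma ex_Xu_u u v : ex_derive (fun t => c1 (Xu Z t v)) u /\ ex_derive (fun t => c2 (Xu Z t v)) u /\ ex_derive (fun t => c3 (Xu Z t v)) u.
Proof. destruct HZ as [H1 [H2 H3]]. unfold Xu, frame_coords, pd3_u, c1, c2, c3; simpl. split; [exact (exuu _ H1 _ _)|split; [exact (exuu _ H2 _ _)|]].
  apply exd_plus; [exact (exuu _ H3 _ _)|]. apply exd_mult; [exact (exd_const _ _)|].
  apply exd_minus; apply exd_mult; [exact (exu _ H2 _ _)|exact (exuu _ H1 _ _)|exact (exu _ H1 _ _)|exact (exuu _ H2 _ _)].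
Qed.
Lemma ex_Xu_v u v : ex_derive (fun t => c1 (Xu Z u t)) v /\ ex_derive (fun t => c2 (Xu Z u t)) v /\ ex_derive (fun t => c3 (Xu Z u t)) v.
Proof. destruct HZ as [H1 [H2 H3]]. unfold Xu, frame_coords, pd3_u, c1, c2, c3; simpl. split; [exact (exuv _ H1 _ _)|split; [exact (exuv _ H2 _ _)|]].
  apply exd_plus; [exact (exuv _ H3 _ _)|]. apply exd_mult; [exact (exd_const _ _)|].
  apply exd_minus; apply exd_mult; [exact (exv _ H2 _ _)|exact (exuv _ H1 _ _)|exact (exv _ H1 _ _)|exact (exuv _ H2 _ _)].
Qed.
Lemma ex_Xv_u u v : ex_derive (fun t => c1 (Xv Z t v)) u /\ ex_derive (fun t => c2 (Xv Z t v)) u /\ ex_derive (fun t => c3 (Xv Z t v)) u.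
Proof. destruct HZ as [H1 [H2 H3]]. unfold Xv, frame_coords, pd3_v, c1, c2, c3; simpl. split; [exact (exvu _ H1 _ _)|split; [exact (exvu _ H2 _ _)|]].
  apply exd_plus; [exact (exvu _ H3 _ _)|]. apply exd_mult; [exact (exd_const _ _)|].
  apply exd_minus; apply exd_mult; [exact (exu _ H2 _ _)|exact (exvu _ H1 _ _)|exact (exu _ H1 _ _)|exact (exvu _ H2 _ _)].
Qed.
Lemma ex_Xv_v u v : ex_derive (fun t => c1 (Xv Z u t)) v /\ ex_derive (fun t => c2 (Xv Z u t)) v /\ ex_derive (fun t => c3 (Xv Z u t)) v.
Proof. destruct HZ as [H1 [H2 H3]]. unfold Xv, frame_coords, pd3_v, c1, c2, c3; simpl. split; [exact (exvv _ H1 _ _)|split; [exact (exvv _ H2 _ _)|]].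
  apply exd_plus; [exact (exvv _ H3 _ _)|]. apply exd_mult; [exact (exd_const _ _)|].
  apply exd_minus; apply exd_mult; [exact (exv _ H2 _ _)|exact (exvv _ H1 _ _)|exact (exv _ H1 _ _)|exact (exvv _ H2 _ _)].
Qed.

Lemma schwarz2 f : C2_2d f -> forall u v, pd_u (pd_v f) u v = pd_v (pd_u f) u v.
Proof.
  intros Hf u v. pose proof Hf as [H1 [H2 H3]].
  unfold pd_u, pd_v. apply Schwarz.
  - exists (mkposreal 1 Rlt_0_1). intros x y _ _.
    split; [exact (exu _ Hf x y)|]. split; [exact (exv _ Hf x y)|].
    split; [exact (exvu _ Hf x y)|exact (exuv _ Hf x y)].
  - apply continuity_2d_pt_filterlim. destruct (H3 u v) as [_ [_ [C _]]]. exact C.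
  - apply continuity_2d_pt_filterlim. destruct (H2 u v) as [_ [_ [_ C]]]. exact C.
Qed.

Lemma d3_Xv_u u v : Derive (fun t => c3 (Xv Z t v)) u =
  pd_u (pd_v (comp3 Z)) u v + / 2 * ((pd_u (comp2 Z) u v * pd_v (comp1 Z) u v + comp2 Z u v * pd_u (pd_v (comp1 Z)) u v)
    - (pd_u (comp1 Z) u v * pd_v (comp2 Z) u v + comp1 Z u v * pd_u (pd_v (comp2 Z)) u v)).
Proof.
  destruct HZ as [H1 [H2 H3]]. apply is_derive_unique.
  unfold Xv, frame_coords, pd3_v, c1, c2, c3; simpl.
  apply (isd_ext (fun t => pd_v (comp3 Z) t v + (/ 2 * (comp2 Z t v * pd_v (comp1 Z) t v + - (comp1 Z t v * pd_v (comp2 Z) t v)))) _ u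
    (pd_u (pd_v (comp3 Z)) u v + / 2 * ((pd_u (comp2 Z) u v * pd_v (comp1 Z) u v + comp2 Z u v * pd_u (pd_v (comp1 Z)) u v)
    + - (pd_u (comp1 Z) u v * pd_v (comp2 Z) u v + comp1 Z u v * pd_u (pd_v (comp2 Z)) u v)))).
  intros; unfold comp1, comp2, c1, c2; simpl; ring.
  fixeq; ring.
  { apply (isd_plus (fun t => pd_v (comp3 Z) t v)). apply Derive_correct; exact (exvu _ H3 _ _).
      apply (is_derive_scal (fun t => comp2 Z t v * pd_v (comp1 Z) t v + - (comp1 Z t v * pd_v (comp2 Z) t v))).
      apply (isd_plus (fun t => comp2 Z t v * pd_v (comp1 Z) t v)).
      apply (isd_mult (fun t => comp2 Z t v) (fun t => pd_v (comp1 Z) t v)); apply Derive_correct. exact (exu _ H2 _ _). exact (exvu _ H1 _ _).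
      apply (isd_opp (fun t => comp1 Z t v * pd_v (comp2 Z) t v)).
      apply (isd_mult (fun t => comp1 Z t v) (fun t => pd_v (comp2 Z) t v)); apply Derive_correct. exact (exu _ H1 _ _). exact (exvu _ H2 _ _). }
Qed.

Lemma d3_Xu_v u v : Derive (fun t => c3 (Xu Z u t)) v =
  pd_v (pd_u (comp3 Z)) u v + / 2 * ((pd_v (comp2 Z) u v * pd_u (comp1 Z) u v + comp2 Z u v * pd_v (pd_u (comp1 Z)) u v)
    - (pd_v (comp1 Z) u v * pd_u (comp2 Z) u v + comp1 Z u v * pd_v (pd_u (comp2 Z)) u v)).
Proof.
  destruct HZ as [H1 [H2 H3]]. apply is_derive_unique.
  unfold Xu, frame_coords, pd3_u, c1, c2, c3; simpl.
  apply (isd_ext (fun t => pd_u (comp3 Z) u t + (/ 2 * (comp2 Z u t * pd_u (comp1 Z) u t + - (comp1 Z u t * pd_u (comp2 Z) u t)))) _ v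
    (pd_v (pd_u (comp3 Z)) u v + / 2 * ((pd_v (comp2 Z) u v * pd_u (comp1 Z) u v + comp2 Z u v * pd_v (pd_u (comp1 Z)) u v)
    + - (pd_v (comp1 Z) u v * pd_u (comp2 Z) u v + comp1 Z u v * pd_v (pd_u (comp2 Z)) u v)))).
  intros; unfold comp1, comp2, c1, c2; simpl; ring.
  fixeq; ring.
  { apply (isd_plus (fun t => pd_u (comp3 Z) u t)). apply Derive_correct; exact (exuv _ H3 _ _).
      apply (is_derive_scal (fun t => comp2 Z u t * pd_u (comp1 Z) u t + - (comp1 Z u t * pd_u (comp2 Z) u t))).
      apply (isd_plus (fun t => comp2 Z u t * pd_u (comp1 Z) u t)).
      apply (isd_mult (fun t => comp2 Z u t) (fun t => pd_u (comp1 Z) u t)); apply Derive_correct. exact (exv _ H2 _ _). exact (exuv _ H1 _ _).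
      apply (isd_opp (fun t => comp1 Z u t * pd_u (comp2 Z) u t)).
      apply (isd_mult (fun t => comp1 Z u t) (fun t => pd_u (comp2 Z) u t)); apply Derive_correct. exact (exv _ H1 _ _). exact (exuv _ H2 _ _). }
Qed.

Lemma pd3u_Xv u v : pd3_u (Xv Z) u v = (pd_u (pd_v (comp1 Z)) u v, pd_u (pd_v (comp2 Z)) u v, Derive (fun t => c3 (Xv Z t v)) u).
Proof. reflexivity. Qed.
Lemma pd3v_Xu u v : pd3_v (Xu Z) u v = (pd_v (pd_u (comp1 Z)) u v, pd_v (pd_u (comp2 Z)) u v, Derive (fun t => c3 (Xu Z u t)) v).
Proof. reflexivity. Qed.

Lemma cov_sym u v : cov_u Z (Xv Z) u v = cov_v Z (Xu Z) u v.
Proof.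
  pose proof HZ as [H1 [H2 H3]].
  unfold cov_u, cov_v. rewrite pd3u_Xv, pd3v_Xu, d3_Xv_u, d3_Xu_v.
  rewrite !(schwarz2 _ H1), !(schwarz2 _ H2), !(schwarz2 _ H3).
  unfold Xu, Xv, frame_coords, pd3_u, pd3_v, add3, nabla_E, c1, c2, c3; simpl.
  unfold comp1, comp2, c1, c2; simpl. f_equal; [f_equal|]; ring.
Qed.

Lemma normal_perp u v : dot3 (Xu Z u v) (unit_normal Z u v) = 0 /\ dot3 (Xv Z u v) (unit_normal Z u v) = 0.
Proof.
  unfold unit_normal. cbv zeta. destruct (Xu Z u v) as [[a1 a2] a3]. destruct (Xv Z u v) as [[b1 b2] b3].
  unfold dot3, cross3, scal3, c1, c2, c3; simpl. split; ring.
Qed.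

End Zsec.

Lemma dot3_add (p q n : vec3) : dot3 (add3 p q) n = dot3 p n + dot3 q n.
Proof. destruct p as [[p1 p2] p3], q as [[q1 q2] q3], n as [[n1 n2] n3]; unfold dot3, add3, c1, c2, c3; simpl; ring. Qed.

Lemma dot3_pos (a : vec3) : a <> (0, 0, 0) -> 0 < dot3 a a.
Proof. destruct a as [[a1 a2] a3]; unfold dot3, c1, c2, c3; simpl. intros H.
  destruct (Req_dec a1 0); [destruct (Req_dec a2 0); [destruct (Req_dec a3 0)|]|]; subst.
  exfalso; auto. all: nra. Qed.

Lemma cmi_Xu_pos (Z : R -> R -> vec3) u v : conformal_minimal_immersion Z -> 0 < dot3 (Xu Z u v) (Xu Z u v).
Proof.
  intros [[_ [_ [_ Hi]]] _]. apply dot3_pos. intros H0.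
  destruct (Hi u v 1 0) as [H _]. rewrite H0. destruct (Xv Z u v) as [[b1 b2] b3].
  unfold add3, scal3, c1, c2, c3; simpl. f_equal; [f_equal|]; ring. lra.
Qed.

Lemma cmi_Zc2 Z : conformal_minimal_immersion Z -> Zc2 Z.
Proof. intros [[H1 [H2 [H3 _]]] _]. split; auto. Qed.

Lemma surf_eqs (Z N : R -> R -> vec3) u v d :
  conformal_minimal_immersion Z ->
  ex_derive (fun t => c1 (N t v)) u -> ex_derive (fun t => c2 (N t v)) u -> ex_derive (fun t => c3 (N t v)) u ->
  ex_derive (fun t => c1 (N u t)) v -> ex_derive (fun t => c2 (N u t)) v -> ex_derive (fun t => c3 (N u t)) v ->
  0 < d -> (forall t, Rabs (t - u) < d -> unit_normal Z t v = N t v) ->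
  (forall t, Rabs (t - v) < d -> unit_normal Z u t = N u t) ->
  let a := Xu Z u v in let b := Xv Z u v in let NN := N u v in
  let NU := pd3_u N u v in let NV := pd3_v N u v in
  - dot3 a NU - dot3 b NV + dot3 (nabla_E a a) NN + dot3 (nabla_E b b) NN = 0 /\
  - dot3 b NU + dot3 (nabla_E a b) NN = - dot3 a NV + dot3 (nabla_E b a) NN.
Proof.
  intros Hc Nu1 Nu2 Nu3 Nv1 Nv2 Nv3 Hd Hlu Hlv. cbv zeta.
  pose proof (cmi_Zc2 Z Hc) as HZ.
  destruct (ex_Xu_u Z HZ u v) as [A1 [A2 A3]]. destruct (ex_Xu_v Z HZ u v) as [B1 [B2 B3]].
  destruct (ex_Xv_u Z HZ u v) as [C1 [C2 C3]]. destruct (ex_Xv_v Z HZ u v) as [D1 [D2 D3]].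
  assert (K1 := conv_u (Xu Z) N u v d A1 A2 A3 Nu1 Nu2 Nu3 Hd
     ltac:(intros t Ht; rewrite <- Hlu; auto; apply normal_perp)).
  assert (K2 := conv_v (Xv Z) N u v d D1 D2 D3 Nv1 Nv2 Nv3 Hd
     ltac:(intros t Ht; rewrite <- Hlv; auto; apply normal_perp)).
  assert (K3 := conv_u (Xv Z) N u v d C1 C2 C3 Nu1 Nu2 Nu3 Hd
     ltac:(intros t Ht; rewrite <- Hlu; auto; apply normal_perp)).
  assert (K4 := conv_v (Xu Z) N u v d B1 B2 B3 Nv1 Nv2 Nv3 Hd
     ltac:(intros t Ht; rewrite <- Hlv; auto; apply normal_perp)).
  assert (HN : unit_normal Z u v = N u v) by (apply Hlu; rewrite Rminus_diag, Rabs_R0; auto).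
  split.
  - pose proof (cmi_Xu_pos Z u v Hc) as Hp.
    destruct Hc as [Hi [Hcf Hm]]. specialize (Hm u v). unfold mean_curvature in Hm.
    unfold conformal_factor in Hm. rewrite HN in Hm. unfold cov_u, cov_v in Hm. rewrite !dot3_add in Hm.
    apply Rmult_integral in Hm. destruct Hm as [Hm|Hm].
    + lra.
    + exfalso. apply Rinv_neq_0_compat in Hm; auto. lra.
  - pose proof (cov_sym Z HZ u v) as E. apply (f_equal (fun w => dot3 w (N u v))) in E.
    unfold cov_u, cov_v in E. rewrite !dot3_add in E. lra.
Qed.


Lemma cont_eps (f : R -> R) u eps : continuity_pt f u -> 0 < eps ->
  exists d, 0 < d /\ forall t, Rabs (t - u) < d -> Rabs (f t - f u) < eps.
Proof.
  intros Hc He. destruct (Hc eps He) as [d [Hd H]]. exists d; split; auto.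
  intros t Ht. destruct (Req_dec t u) as [->|Hne].
  - rewrite Rminus_diag, Rabs_R0; auto.
  - apply (H t). split. split; [exact I|auto]. exact Ht.
Qed.

Lemma nz_loc (f : R -> R) u : continuity_pt f u -> f u <> 0 ->
  exists d, 0 < d /\ forall t, Rabs (t - u) < d -> f t <> 0.
Proof.
  intros Hc Hn. destruct (cont_eps f u (Rabs (f u)) Hc) as [d [Hd H]].
  apply Rabs_pos_lt; auto. exists d; split; auto. intros t Ht Hz. specialize (H t Ht).
  rewrite Hz in H. rewrite Rminus_0_l, Rabs_Ropp in H. lra.
Qed.

Lemma cont2_u (f : R -> R -> R) u v : continuity_2d_pt f u v -> continuity_pt (fun t => f t v) u.
Proof.
  intros Hc eps He. destruct (Hc (mkposreal eps He)) as [d H]. exists d. split. apply cond_pos.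
  intros t [_ Ht]. simpl in *. unfold R_dist in *. apply H; auto. rewrite Rminus_diag, Rabs_R0. apply cond_pos.
Qed.
Lemma cont2_v (f : R -> R -> R) u v : continuity_2d_pt f u v -> continuity_pt (fun t => f u t) v.
Proof.
  intros Hc eps He. destruct (Hc (mkposreal eps He)) as [d H]. exists d. split. apply cond_pos.
  intros t [_ Ht]. simpl in *. unfold R_dist in *. apply H; auto. rewrite Rminus_diag, Rabs_R0. apply cond_pos.
Qed.

Lemma dens (f g : R -> R) u : continuity_pt f u -> continuity_pt g u ->
  (exists d, 0 < d /\ forall t, 0 < Rabs (t - u) < d -> f t = g t) -> f u = g u.
Proof.
  intros Hf Hg [d [Hd H]].
  destruct (Req_dec (f u) (g u)) as [|Hne]; auto. exfalso.
  set (e := Rabs (f u - g u) / 2).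
  assert (He : 0 < e) by (unfold e; apply Rdiv_lt_0_compat; [apply Rabs_pos_lt; lra|lra]).
  destruct (cont_eps f u e Hf He) as [d1 [Hd1 H1]]. destruct (cont_eps g u e Hg He) as [d2 [Hd2 H2]].
  set (t := u + Rmin d (Rmin d1 d2) / 2).
  assert (Hm : 0 < Rmin d (Rmin d1 d2)) by (repeat apply Rmin_glb_lt; auto).
  assert (Hm1 : Rmin d (Rmin d1 d2) <= d) by apply Rmin_l.
  assert (Hm2 : Rmin d (Rmin d1 d2) <= d1) by (eapply Rle_trans; [apply Rmin_r|apply Rmin_l]).
  assert (Hm3 : Rmin d (Rmin d1 d2) <= d2) by (eapply Rle_trans; [apply Rmin_r|apply Rmin_r]).
  assert (Ht : Rabs (t - u) = Rmin d (Rmin d1 d2) / 2).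
  { unfold t. replace (u + Rmin d (Rmin d1 d2) / 2 - u) with (Rmin d (Rmin d1 d2) / 2) by ring.
    apply Rabs_pos_eq; lra. }
  assert (E := H t ltac:(lra)).
  assert (A1 := H1 t ltac:(lra)). assert (A2 := H2 t ltac:(lra)).
  rewrite E in A1. unfold e in *.
  assert (Rabs (f u - g u) <= Rabs (g t - f u) + Rabs (g t - g u)).
  { replace (f u - g u) with (- (g t - f u) + (g t - g u)) by ring.
    eapply Rle_trans; [apply Rabs_triang|]. rewrite Rabs_Ropp; lra. }
  lra.
Qed.

Lemma const1 (f : R -> R) : (forall t, is_derive f t 0) -> forall x y, f x = f y.
Proof.
  intros H x y. destruct (Rtotal_order x y) as [Hl|[->|Hl]]; auto.
  - destruct (MVT_gen f x y (fun _ => 0)) as [c [_ Hc]].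
    intros; apply H. intros; eapply isd_cont, H. lra.
  - destruct (MVT_gen f x y (fun _ => 0)) as [c [_ Hc]].
    intros; apply H. intros; eapply isd_cont, H. lra.
Qed.

Lemma const2 (f : R -> R -> R) : (forall u v, is_derive (fun t => f t v) u 0) ->
  (forall u v, is_derive (fun t => f u t) v 0) -> forall u v, f u v = f 0 0.
Proof.
  intros Hu Hv u v. rewrite (const1 (fun t => f t v) (fun t => Hu t v) u 0).
  apply (const1 (fun t => f 0 t) (Hv 0)).
Qed.

Lemma decomp (a1 a2 a3 x1 x2 x3 N1 N2 N3 L : R) :
  N1*N1 + N2*N2 + N3*N3 = 1 -> x1*N1 + x2*N2 + x3*N3 = 0 -> x1*x1+x2*x2+x3*x3 = L ->
  a1*N1 + a2*N2 + a3*N3 = 0 ->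
  let y1 := N2 * x3 - N3 * x2 in let y2 := N3 * x1 - N1 * x3 in let y3 := N1 * x2 - N2 * x1 in
  L * a1 = (a1*x1+a2*x2+a3*x3) * x1 + (a1*y1+a2*y2+a3*y3) * y1 /\
  L * a2 = (a1*x1+a2*x2+a3*x3) * x2 + (a1*y1+a2*y2+a3*y3) * y2 /\
  L * a3 = (a1*x1+a2*x2+a3*x3) * x3 + (a1*y1+a2*y2+a3*y3) * y3.
Proof. intros H1 H2 H3 H4 y1 y2 y3. unfold y1, y2, y3. split; [|split]; nsatz. Qed.

Definition E1 (a b NN NU NV : vec3) :=
  - dot3 a NU - dot3 b NV + dot3 (nabla_E a a) NN + dot3 (nabla_E b b) NN = 0.
Definition E2 (a b NN NU NV : vec3) :=
  - dot3 b NU + dot3 (nabla_E a b) NN = - dot3 a NV + dot3 (nabla_E b a) NN.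

Lemma alg_core (x1 x2 x3 y1 y2 y3 N1 N2 N3 u1 u2 u3 w1 w2 w3 m n : R) :
  E1 (x1,x2,x3) (y1,y2,y3) (N1,N2,N3) (u1,u2,u3) (w1,w2,w3) ->
  E2 (x1,x2,x3) (y1,y2,y3) (N1,N2,N3) (u1,u2,u3) (w1,w2,w3) ->
  E1 (m*x1+n*y1, m*x2+n*y2, m*x3+n*y3) (m*y1-n*x1, m*y2-n*x2, m*y3-n*x3) (N1,N2,N3) (u1,u2,u3) (w1,w2,w3) ->
  E2 (m*x1+n*y1, m*x2+n*y2, m*x3+n*y3) (m*y1-n*x1, m*y2-n*x2, m*y3-n*x3) (N1,N2,N3) (u1,u2,u3) (w1,w2,w3) ->
  N3 * (x1 * y2 - x2 * y1) <> 0 -> n = 0 /\ m * m + n * n = m.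
Proof.
  intros Ex1 Ex2 Ea1 Ea2 HT.
  unfold E1, E2, dot3, nabla_E, c1, c2, c3 in *; simpl in *.
  set (T0 := N3 * (x1 * y2 - x2 * y1)) in *.
  set (Q0 := (/ 2 * (x2 * x3 + x3 * x2) + / 2 * (y2 * y3 + y3 * y2)) * N1
           + (- / 2 * (x1 * x3 + x3 * x1) - / 2 * (y1 * y3 + y3 * y1)) * N2
           + (/ 2 * (x1 * x2 - x2 * x1) + / 2 * (y1 * y2 - y2 * y1)) * N3).
  set (A0 := - (x1 * u1 + x2 * u2 + x3 * u3) - (y1 * w1 + y2 * w2 + y3 * w3)).
  set (B0 := - (y1 * u1 + y2 * u2 + y3 * u3) + (x1 * w1 + x2 * w2 + x3 * w3)).
  assert (HA : A0 + Q0 = 0) by (unfold A0, Q0; lra).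
  assert (HB : B0 + T0 = 0) by (unfold B0, T0; lra).
  assert (P1 : m * A0 + n * B0 + (m * m + n * n) * Q0 = 0) by (unfold A0, B0, Q0; lra).
  assert (P2 : m * B0 - n * A0 + (m * m + n * n) * T0 = 0) by (unfold A0, B0, T0; lra).
  assert (A0 = - Q0) by lra. assert (B0 = - T0) by lra.
  set (r := m * m + n * n - m) in *.
  assert (P1' : r * Q0 - n * T0 = 0) by (unfold r; rewrite <- P1; rewrite H, H0; ring).
  assert (P2' : n * Q0 + r * T0 = 0) by (unfold r; rewrite <- P2; rewrite H, H0; ring).
  assert (P3 : (r * r + n * n) * T0 = 0).
  { transitivity (r * (r * Q0 - n * T0) * 0 + r * (n * Q0 + r * T0) - n * (r * Q0 - n * T0) ); [|rewrite P1', P2'; ring]. ring. }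
  apply Rmult_integral in P3. destruct P3 as [P3|P3]; [|contradiction].
  assert (r = 0 /\ n = 0) as [Hr Hn] by (split; nra).
  split; auto. unfold r in Hr. lra.
Qed.

Lemma alg_uniq (a b x N NU NV : vec3) L :
  dot3 N N = 1 -> dot3 x N = 0 -> dot3 x x = L -> 0 < L -> dot3 a N = 0 -> b = cross3 N a -> a <> (0, 0, 0) ->
  E1 x (cross3 N x) N NU NV -> E2 x (cross3 N x) N NU NV -> E1 a b N NU NV -> E2 a b N NU NV ->
  c3 N * (c1 x * c2 (cross3 N x) - c2 x * c1 (cross3 N x)) <> 0 -> a = x.
Proof.
  destruct a as [[a1 a2] a3], x as [[x1 x2] x3], N as [[N1 N2] N3], NU as [[u1 u2] u3], NV as [[w1 w2] w3].
  unfold dot3, cross3, c1, c2, c3; simpl. intros HN Hx HL HLp Ha Hb Ha0 Ex1 Ex2 Ea1 Ea2 HT. subst b.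
  destruct (decomp a1 a2 a3 x1 x2 x3 N1 N2 N3 L HN Hx HL Ha) as [D1 [D2 D3]].
  set (y1 := N2 * x3 - N3 * x2) in *. set (y2 := N3 * x1 - N1 * x3) in *. set (y3 := N1 * x2 - N2 * x1) in *.
  set (m := (a1*x1+a2*x2+a3*x3) / L). set (n := (a1*y1+a2*y2+a3*y3) / L).
  assert (A1 : a1 = m * x1 + n * y1) by (unfold m, n; apply (Rmult_eq_reg_l L); [|lra]; rewrite D1; field; lra).
  assert (A2 : a2 = m * x2 + n * y2) by (unfold m, n; apply (Rmult_eq_reg_l L); [|lra]; rewrite D2; field; lra).
  assert (A3 : a3 = m * x3 + n * y3) by (unfold m, n; apply (Rmult_eq_reg_l L); [|lra]; rewrite D3; field; lra).
  clearbody m n.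
  assert (B : (N2 * a3 - N3 * a2, N3 * a1 - N1 * a3, N1 * a2 - N2 * a1) = (m*y1-n*x1, m*y2-n*x2, m*y3-n*x3)).
  { rewrite A1, A2, A3. unfold y1, y2, y3.
    set (xN := x1*N1 + x2*N2 + x3*N3) in *. set (NN := N1*N1 + N2*N2 + N3*N3) in *.
    f_equal; [f_equal|].
    - transitivity (m * (N2 * x3 - N3 * x2) - n * x1 + n * (N1 * xN - x1 * (NN - 1))); [unfold xN, NN; ring|].
      rewrite Hx, HN; ring.
    - transitivity (m * (N3 * x1 - N1 * x3) - n * x2 + n * (N2 * xN - x2 * (NN - 1))); [unfold xN, NN; ring|].
      rewrite Hx, HN; ring.
    - transitivity (m * (N1 * x2 - N2 * x1) - n * x3 + n * (N3 * xN - x3 * (NN - 1))); [unfold xN, NN; ring|].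
      rewrite Hx, HN; ring. }
  rewrite B in Ea1, Ea2. rewrite A1, A2, A3 in Ea1, Ea2.
  destruct (alg_core x1 x2 x3 y1 y2 y3 N1 N2 N3 u1 u2 u3 w1 w2 w3 m n Ex1 Ex2 Ea1 Ea2 HT) as [Hn Hm].
  subst n. assert (m <> 0).
  { intro Hm0. apply Ha0. rewrite A1, A2, A3, Hm0. f_equal; [f_equal|]; ring. }
  assert (m = 1) by (apply (Rmult_eq_reg_l m); [lra|auto]).
  rewrite A1, A2, A3. subst m. f_equal; [f_equal|]; ring.
Qed.

Lemma cross_conf (a b : vec3) : dot3 a a = dot3 b b -> dot3 a b = 0 -> 0 < dot3 a a ->
  cross3 (scal3 (/ sqrt (dot3 (cross3 a b) (cross3 a b))) (cross3 a b)) a = b.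
Proof.
  destruct a as [[a1 a2] a3], b as [[b1 b2] b3]. unfold dot3, cross3, scal3, c1, c2, c3; simpl.
  intros H1 H2 HL. remember (a1 * a1 + a2 * a2 + a3 * a3) as L eqn:HLd.
  assert (E : (a2 * b3 - a3 * b2) * (a2 * b3 - a3 * b2) + (a3 * b1 - a1 * b3) * (a3 * b1 - a1 * b3) +
     (a1 * b2 - a2 * b1) * (a1 * b2 - a2 * b1) = L * L).
  { clear HL. nsatz. }
  rewrite E. replace (L * L) with (Rsqr L) by reflexivity. rewrite sqrt_Rsqr by lra.
  f_equal; [f_equal|].
  - assert (I : (a3 * b1 - a1 * b3) * a3 - (a1 * b2 - a2 * b1) * a2 = b1 * L) by (clear HL; nsatz).
    transitivity (/ L * ((a3 * b1 - a1 * b3) * a3 - (a1 * b2 - a2 * b1) * a2)); [ring|]. rewrite I. field. lra.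
  - assert (I : (a1 * b2 - a2 * b1) * a1 - (a2 * b3 - a3 * b2) * a3 = b2 * L) by (clear HL; nsatz).
    transitivity (/ L * ((a1 * b2 - a2 * b1) * a1 - (a2 * b3 - a3 * b2) * a3)); [ring|]. rewrite I. field. lra.
  - assert (I : (a2 * b3 - a3 * b2) * a2 - (a3 * b1 - a1 * b3) * a1 = b3 * L) by (clear HL; nsatz).
    transitivity (/ L * ((a2 * b3 - a3 * b2) * a2 - (a3 * b1 - a1 * b3) * a1)); [ring|]. rewrite I. field. lra.
Qed.

Lemma sc1 x : sin x ^ 2 + cos x ^ 2 = 1.
Proof. rewrite <- !Rsqr_pow2. apply sin2_cos2. Qed.

Lemma omega_ineq a th : in_Omega a th -> 0 < a /\ 1 < 2 * a ^ 2 + cos (2 * th).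
Proof.
  intros [Ha Hth]. split; auto. unfold theta_plus in Hth.
  destruct (Rlt_dec 1 a) as [H1|H1].
  - rewrite cos_2a_cos. apply Rabs_def2 in Hth.
    assert (0 < cos th) by (apply cos_gt_0; lra). nra.
  - assert (Hb := acos_bound (1 - 2 * a ^ 2)).
    assert (Hr : -1 <= 1 - 2 * a ^ 2 <= 1) by nra.
    assert (E : cos (2 * th) = cos (2 * Rabs th)).
    { unfold Rabs; destruct (Rcase_abs th); auto. rewrite <- cos_neg. f_equal; ring. }
    assert (0 <= Rabs th) by apply Rabs_pos.
    assert (Hc : cos (acos (1 - 2 * a ^ 2)) < cos (2 * Rabs th)).
    { apply cos_decreasing_1; lra. }
    rewrite cos_acos in Hc by auto. lra.
Qed.

Lemma P_pos a th x : in_Omega a th -> -1 <= x <= 1 -> 0 < Ppoly a th x.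
Proof.
  intros HO Hx. destruct (omega_ineq a th HO) as [Ha Hk].
  unfold Ppoly, Cconst.
  set (k := cos (2 * th)) in *. set (s := sin (2 * th)) in *.
  assert (Hs : s ^ 2 = 1 - k ^ 2) by (unfold s, k; pose proof (sc1 (2*th)); lra).
  set (C := s / (2 * a)).
  assert (HP1 : 0 < a ^ 2 + k - C ^ 2).
  { assert (E : a ^ 2 + k - C ^ 2 = ((2 * a ^ 2 + k) ^ 2 - 1) / (4 * a ^ 2)).
    { unfold C. replace ((s/(2*a))^2) with (s^2/(4*a^2)) by (field; lra). rewrite Hs. field. lra. }
    rewrite E. apply Rdiv_lt_0_compat. assert (0 < (2 * a ^ 2 + k - 1) * (2 * a ^ 2 + k + 1)) by (apply Rmult_lt_0_compat; lra). replace ((2 * a ^ 2 + k) ^ 2 - 1) with ((2 * a ^ 2 + k - 1) * (2 * a ^ 2 + k + 1)) by ring. lra. nra. }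
  set (y := x ^ 2). assert (0 <= y <= 1) by (unfold y; nra).
  assert (E : a ^ 2 + k * y - C ^ 2 * x ^ 4 = (1 - y) * a ^ 2 + y * (a ^ 2 + k - C ^ 2) + C ^ 2 * y * (1 - y)).
  { unfold y; ring. }
  rewrite E. assert (0 <= C ^ 2) by apply pow2_ge_0.
  assert (0 <= C ^ 2 * y * (1 - y)) by (apply Rmult_le_pos; [apply Rmult_le_pos|]; lra).
  destruct (Req_dec y 0) as [Hy|Hy].
  - rewrite Hy. nra.
  - assert (0 < y) by lra. nra.
Qed.

Definition qf a th (x : R) := - sqrt (Ppoly a th (cos x)).

Lemma P_cos_pos a th x : in_Omega a th -> 0 < Ppoly a th (cos x).
Proof. intros; apply P_pos; auto. apply COS_bound. Qed.

Lemma T_qf a th n : in_Omega a th -> T n (qf a th).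
Proof.
  intros HO. unfold qf. apply T_opp. apply T_sqrt; [|intros; apply P_cos_pos; auto].
  unfold Ppoly. destruct (T_sincos n) as [_ Hc].
  apply T_plus; [apply T_plus|].
  - apply T_const.
  - apply T_mult; [apply T_const|]. apply (T_ext n (fun x => cos x * (cos x * 1))); [intros; ring|].
    repeat apply T_mult; auto using T_const.
  - apply (T_ext n (fun x => - (Cconst a th ^ 2 * (cos x * (cos x * (cos x * (cos x * 1))))))); [intros; ring|].
    apply T_opp. apply T_mult; [apply T_const|]. repeat apply T_mult; auto using T_const.
Qed.

Lemma isd_Pcos a th x :
  is_derive (fun y => Ppoly a th (cos y)) x (- sin x * (2 * cos (2 * th) * cos x - 4 * Cconst a th ^ 2 * cos x ^ 3)).
Proof. unfold Ppoly. auto_derive; auto. ring. Qed.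

Lemma isd_qf a th x : in_Omega a th ->
  is_derive (qf a th) x (sin x * (2 * cos (2 * th) * cos x - 4 * Cconst a th ^ 2 * cos x ^ 3)
                          / (2 * sqrt (Ppoly a th (cos x)))).
Proof.
  intros HO. pose proof (P_cos_pos a th x HO) as HP. unfold qf.
  apply (isd_ext (fun y => - sqrt (Ppoly a th (cos y))) _ x (- ((- sin x * (2 * cos (2 * th) * cos x - 4 * Cconst a th ^ 2 * cos x ^ 3)) / (2 * sqrt (Ppoly a th (cos x)))))).
  intros; reflexivity. fixeq. unfold Rdiv; ring.
  apply isd_opp. apply (is_derive_sqrt (fun y => Ppoly a th (cos y))); auto. apply isd_Pcos.
Qed.

Lemma S2_C1 f : S2 1 f -> C1_2d f.
Proof.
  intros [Hc [fu [fv [H1 [H2 [H3 H4]]]]]].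
  assert (Eu : pd_u f = fu) by (extensionality u; extensionality v; apply is_derive_unique, H1).
  assert (Ev : pd_v f = fv) by (extensionality u; extensionality v; apply is_derive_unique, H2).
  intros u v. rewrite Eu, Ev. split; [eexists; apply H1|]. split; [eexists; apply H2|].
  split; apply continuity_2d_pt_filterlim; auto.
Qed.

Lemma S2_C2 f : S2 2 f -> C2_2d f.
Proof.
  intros Hf. pose proof Hf as [Hc [fu [fv [H1 [H2 [H3 H4]]]]]].
  assert (Eu : pd_u f = fu) by (extensionality u; extensionality v; apply is_derive_unique, H1).
  assert (Ev : pd_v f = fv) by (extensionality u; extensionality v; apply is_derive_unique, H2).
  split; [apply S2_C1, S2_mono, Hf|]. rewrite Eu, Ev. split; apply S2_C1; auto.
Qed.

Section PhiSec.
Variables (a th : R) (phi beta G : R -> R).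
Hypothesis HO : in_Omega a th.
Hypothesis Hpd : forall u, ex_derive phi u.
Hypothesis Hpeq : forall u, (Derive phi u) ^ 2 = Ppoly a th (cos (phi u)).
Hypothesis Hp0' : Derive phi 0 <= 0.
Hypothesis Hb : forall u, is_derive beta u (Cconst a th * (cos (phi u)) ^ 2).
Hypothesis HG : forall u, is_derive G u
     (((Cconst a th) ^ 2 * (cos (phi u)) ^ 2 - cos (2 * th)) / (a - Derive phi u)).

Lemma phi_deriv u : Derive phi u = qf a th (phi u).
Proof.
  assert (Hneg : Derive phi u < 0).
  { apply deriv_sign_const; auto. intros x Hx. pose proof (Hpeq x) as E.
    rewrite Hx in E. pose proof (P_cos_pos a th (phi x) HO). simpl in E. lra. }
  unfold qf. rewrite <- Hpeq. rewrite <- Rsqr_pow2, sqrt_Rsqr_abs.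
  rewrite Rabs_left; auto; ring.
Qed.

Lemma isd_phi u : is_derive phi u (qf a th (phi u)).
Proof. rewrite <- phi_deriv. apply Derive_correct, Hpd. Qed.

Lemma T_phi n : T n phi.
Proof.
  induction n.
  - simpl; intros x. eapply isd_cont, isd_phi.
  - split. intros x. eapply isd_cont, isd_phi.
    exists (fun u => qf a th (phi u)). split. apply isd_phi.
    apply T_comp; auto. apply T_qf; auto.
Qed.

Definition Cc := Cconst a th.
Definition kk := cos (2 * th).
Definition pf u := qf a th (phi u).
Definition ppf u := - sin (phi u) * cos (phi u) * (kk - 2 * Cc ^ 2 * cos (phi u) ^ 2).
Definition g1f u := (Cc ^ 2 * cos (phi u) ^ 2 - kk) / (a - pf u).

Lemma pf_neg u : pf u < 0.
Proof. unfold pf, qf. pose proof (P_cos_pos a th (phi u) HO).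
  assert (0 < sqrt (Ppoly a th (cos (phi u)))) by (apply sqrt_lt_R0; auto). lra. Qed.

Lemma pf_sq u : pf u ^ 2 = a ^ 2 + kk * cos (phi u) ^ 2 - Cc ^ 2 * cos (phi u) ^ 4.
Proof. unfold pf, kk, Cc. rewrite <- phi_deriv, Hpeq. reflexivity. Qed.

Lemma a_pos : 0 < a.
Proof. destruct HO; auto. Qed.

Lemma den_pos u : 0 < a - pf u.
Proof. pose proof (pf_neg u); pose proof a_pos; lra. Qed.

Lemma isd_pf u : is_derive pf u (ppf u).
Proof.
  unfold pf. apply (isd_ext (fun t => qf a th (phi t)) _ u (qf a th (phi u) *
     (sin (phi u) * (2 * cos (2 * th) * cos (phi u) - 4 * Cconst a th ^ 2 * cos (phi u) ^ 3)
                          / (2 * sqrt (Ppoly a th (cos (phi u))))))).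
  intros; reflexivity.
  2:{ apply isd_comp. apply isd_qf; auto. apply isd_phi. }
  fixeq. unfold ppf, qf, kk, Cc. field. apply Rgt_not_eq, sqrt_lt_R0, P_cos_pos; auto.
Qed.

Lemma T_pf n : T n pf.
Proof. unfold pf. apply T_comp. apply T_qf; auto. apply T_phi. Qed.

Lemma T_cphi n : T n (fun u => cos (phi u)).
Proof. apply T_comp. apply T_sincos. apply T_phi. Qed.
Lemma T_sphi n : T n (fun u => sin (phi u)).
Proof. apply T_comp. apply T_sincos. apply T_phi. Qed.

Lemma T_g1 n : T n g1f.
Proof.
  unfold g1f, Rdiv. apply T_mult.
  - apply T_plus; [|apply T_const]. apply T_mult; [apply T_const|].
    apply (T_ext n (fun u => cos (phi u) * (cos (phi u) * 1))); [intros; ring|].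
    repeat apply T_mult; auto using T_const, T_cphi.
  - apply T_inv. apply T_plus. apply T_const. apply T_opp, T_pf.
    intros u. pose proof (den_pos u). lra.
Qed.

Lemma isd_G u : is_derive G u (g1f u).
Proof. pose proof (HG u) as H. rewrite phi_deriv in H. exact H. Qed.

Lemma T_G n : T n G.
Proof. destruct n.
  - simpl; intros x. eapply isd_cont, isd_G.
  - split. intros x. eapply isd_cont, isd_G. exists g1f; split. apply isd_G. apply T_g1.
Qed.

Lemma T_beta n : T n beta.
Proof. destruct n.
  - simpl; intros x. eapply isd_cont, Hb.
  - split. intros x. eapply isd_cont, Hb. exists (fun u => Cconst a th * (cos (phi u)) ^ 2); split. apply Hb.
    apply T_mult; [apply T_const|].
    apply (T_ext n (fun u => cos (phi u) * (cos (phi u) * 1))); [intros; ring|].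
    repeat apply T_mult; auto using T_const, T_cphi.
Qed.

Lemma isd_cphi u : is_derive (fun t => cos (phi t)) u (- sin (phi u) * pf u).
Proof. apply (isd_ext (fun t => cos (phi t)) _ u (pf u * - sin (phi u))).
  intros; reflexivity. fixeq; ring. apply isd_comp. apply is_derive_cos. apply isd_phi. Qed.
Lemma isd_sphi u : is_derive (fun t => sin (phi t)) u (cos (phi u) * pf u).
Proof. apply (isd_ext (fun t => sin (phi t)) _ u (pf u * cos (phi u))).
  intros; reflexivity. fixeq; ring. apply isd_comp. apply is_derive_sin. apply isd_phi. Qed.

Definition g2f u :=
  (2 * Cc ^ 2 * cos (phi u) * (- sin (phi u) * pf u)) / (a - pf u)
  + (Cc ^ 2 * cos (phi u) ^ 2 - kk) * (ppf u / (a - pf u) ^ 2).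

Lemma isd_g1 u : is_derive g1f u (g2f u).
Proof.
  pose proof (den_pos u) as Hd.
  unfold g1f. apply (isd_ext (fun t => (Cc ^ 2 * (cos (phi t) * cos (phi t)) - kk) * / (a - pf t)) _ u
    ((Cc ^ 2 * ((- sin (phi u) * pf u) * cos (phi u) + cos (phi u) * (- sin (phi u) * pf u)) + - 0) * / (a - pf u)
     + (Cc ^ 2 * (cos (phi u) * cos (phi u)) - kk) * (- (0 + - ppf u) / (a - pf u) ^ 2))).
  intros; unfold Rdiv; ring. fixeq; unfold g2f; field; lra.
  apply (isd_mult (fun t => Cc ^ 2 * (cos (phi t) * cos (phi t)) - kk) (fun t => / (a - pf t))).
  - apply (isd_plus (fun t => Cc ^ 2 * (cos (phi t) * cos (phi t))) (fun t => - kk)); [|apply isd_opp, isd_const].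
    apply (is_derive_scal (fun t => cos (phi t) * cos (phi t))).
    apply (isd_mult (fun t => cos (phi t)) (fun t => cos (phi t))); apply isd_cphi.
  - apply (is_derive_inv (fun t => a - pf t)); [|lra]. apply (isd_plus (fun _ => a) (fun t => - pf t)). apply isd_const. apply isd_opp, isd_pf.
Qed.

Lemma g1_rel u : g1f u * (a - pf u) = Cc ^ 2 * cos (phi u) ^ 2 - kk.
Proof. pose proof (den_pos u). unfold g1f. field. lra. Qed.

Lemma g1_rel2 u : g1f u * cos (phi u) ^ 2 = a + pf u.
Proof.
  pose proof (den_pos u). apply (Rmult_eq_reg_r (a - pf u)); [|lra].
  transitivity ((g1f u * (a - pf u)) * cos (phi u) ^ 2); [ring|].
  rewrite g1_rel. pose proof (pf_sq u). nra.
Qed.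

Lemma g2_rel u : g2f u * (a - pf u) = g1f u * ppf u - 2 * Cc ^ 2 * cos (phi u) * sin (phi u) * pf u.
Proof. pose proof (den_pos u). unfold g2f, g1f. field. lra. Qed.



Ltac unpow := cbn [pow] in *; rewrite ?Rmult_1_r in *.

Definition Af u v := a * v + beta u.
Definition X1 u v := g1f u / a * cos (phi u) * sinh (Af u v) - Cc / a * sin (phi u) * cosh (Af u v).
Definition X2 u v := Cc * v - G u.
Definition X3 u v := - / a * (g1f u * sin (phi u) + Cc ^ 2 / a * sin (phi u) + (Cc * v - G u) * g1f u / 2 * cos (phi u)) * sinh (Af u v)
  + / a * (- Cc * cos (phi u) + Cc * g1f u / a * cos (phi u) + Cc * (Cc * v - G u) / 2 * sin (phi u)) * cosh (Af u v).

Definition xu1 u v := g1f u * sin (phi u) * sinh (Af u v) + Cc * cos (phi u) * cosh (Af u v).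
Definition xu2 (u v : R) := - g1f u.
Definition xu3 u v := g1f u * cos (phi u) * sinh (Af u v) - Cc * sin (phi u) * cosh (Af u v).
Definition xv1 u v := g1f u * cos (phi u) * cosh (Af u v) - Cc * sin (phi u) * sinh (Af u v).
Definition xv2 (u v : R) := Cc.
Definition xv3 u v := - g1f u * sin (phi u) * cosh (Af u v) - Cc * cos (phi u) * sinh (Af u v).

Lemma D_phi u : Derive phi u = pf u.
Proof. apply phi_deriv. Qed.
Lemma D_beta u : Derive beta u = Cc * cos (phi u) ^ 2.
Proof. apply is_derive_unique, Hb. Qed.
Lemma D_G u : Derive G u = g1f u.
Proof. apply is_derive_unique, isd_G. Qed.
Lemma D_g1 u : Derive g1f u = g2f u.
Proof. apply is_derive_unique, isd_g1. Qed.
Lemma ex_phi u : ex_derive phi u. Proof. apply Hpd. Qed.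
Lemma ex_beta u : ex_derive beta u. Proof. eexists; apply Hb. Qed.
Lemma ex_G u : ex_derive G u. Proof. eexists; apply isd_G. Qed.
Lemma ex_g1 u : ex_derive g1f u. Proof. eexists; apply isd_g1. Qed.

Lemma g2c_rel u : g2f u * cos (phi u) = sin (phi u) * (a * g1f u + g1f u * pf u + Cc ^ 2 * cos (phi u) ^ 2).
Proof.
  pose proof (den_pos u). apply (Rmult_eq_reg_r (a - pf u)); [|lra].
  transitivity ((g2f u * (a - pf u)) * cos (phi u)); [ring|]. rewrite g2_rel.
  transitivity (sin (phi u) * (a * (g1f u * (a - pf u)) + (g1f u * (a - pf u)) * pf u + Cc ^ 2 * cos (phi u) ^ 2 * (a - pf u))); [|ring].
  rewrite g1_rel. unfold ppf.
  transitivity (- sin (phi u) * (g1f u * cos (phi u) ^ 2) * (kk - 2 * Cc ^ 2 * cos (phi u) ^ 2) - 2 * Cc ^ 2 * cos (phi u) ^ 2 * sin (phi u) * pf u); [ring|].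
  rewrite g1_rel2. ring.
Qed.

Lemma sc1' u : sin (phi u) ^ 2 + cos (phi u) ^ 2 = 1.
Proof. apply sc1. Qed.
Lemma ch1 x : cosh x ^ 2 - sinh x ^ 2 = 1.
Proof. unfold cosh, sinh. rewrite exp_Ropp. pose proof (exp_pos x). field. lra. Qed.
Lemma inva : a * / a = 1.
Proof. pose proof a_pos. field. lra. Qed.

Ltac rels u := pose proof (sc1' u); pose proof (g1_rel2 u); pose proof (g2c_rel u);
  pose proof (pf_sq u); pose proof (g1_rel u); pose proof inva; pose proof (ch1 (Af u _)).

Lemma isd_X1u u v : is_derive (fun t => X1 t v) u (xu1 u v).
Proof.
  unfold X1, Af. auto_derive. repeat split; auto using ex_phi, ex_beta, ex_g1.
  rewrite D_phi, D_beta, D_g1. unfold xu1, Af. fixeq.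
  pose proof (sc1' u); pose proof (g1_rel2 u); pose proof (g2c_rel u); pose proof inva.
  unfold Rdiv. unpow. nsatz.
Qed.

Lemma invd u : (a - pf u) * / (a - pf u) = 1.
Proof. pose proof (den_pos u). field. lra. Qed.

Ltac xalg u := fixeq; pose proof (sc1' u); pose proof (g2_rel u); pose proof (invd u); unfold ppf in *; pose proof (g1_rel2 u); pose proof (g2c_rel u); pose proof inva;
  pose proof (pf_sq u); pose proof (g1_rel u); unfold Rdiv; unpow; nsatz.

Lemma isd_X2u u v : is_derive (fun t => X2 t v) u (xu2 u v).
Proof.
  unfold X2. auto_derive. auto using ex_G. rewrite D_G. unfold xu2. fixeq; ring.
Qed.

Definition P3 u v := - (sin (phi u) / a) * (g1f u + Cc ^ 2 / a) * sinh (Af u v)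
   + (Cc * cos (phi u) / a) * (g1f u / a - 1) * cosh (Af u v).

Lemma X3_P3 u v : X3 u v = P3 u v - X2 u v * X1 u v / 2.
Proof. unfold X3, P3, X2, X1. field. pose proof a_pos; lra. Qed.

Lemma X1_xu3 u v : X1 u v = xu3 u v / a.
Proof. unfold X1, xu3. field. pose proof a_pos; lra. Qed.

Lemma isd_P3u u v : is_derive (fun t => P3 t v) u ((1 - g1f u / a) * xu3 u v).
Proof.
  unfold P3, Af. auto_derive. repeat split; auto using ex_phi, ex_beta, ex_g1.
  rewrite D_phi, D_beta, D_g1. unfold xu3, Af. xalg u.
Qed.

Lemma isd_X3u u v : is_derive (fun t => X3 t v) u (xu3 u v - / 2 * (X2 u v * xu1 u v - X1 u v * xu2 u v)).
Proof.
  apply (isd_ext (fun t => P3 t v + - (X2 t v * X1 t v * / 2)) _ u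
     ((1 - g1f u / a) * xu3 u v + - ((xu2 u v * X1 u v + X2 u v * xu1 u v) * / 2 + X2 u v * X1 u v * 0))).
  intros; rewrite X3_P3; unfold Rdiv; ring.
  fixeq. rewrite X1_xu3. unfold xu2. field. pose proof a_pos; lra.
  apply (isd_plus (fun t => P3 t v)). apply isd_P3u.
  apply isd_opp. apply (isd_mult (fun t => X2 t v * X1 t v) (fun _ => / 2)); [|apply isd_const].
  apply (isd_mult (fun t => X2 t v) (fun t => X1 t v)). apply isd_X2u. apply isd_X1u.
Qed.

Lemma isd_X1v u v : is_derive (fun t => X1 u t) v (xv1 u v).
Proof.
  unfold X1, Af. auto_derive. auto. unfold xv1, Af. xalg u.
Qed.
Lemma isd_X2v u v : is_derive (fun t => X2 u t) v (xv2 u v).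
Proof.
  unfold X2. auto_derive. auto. unfold xv2. fixeq; ring.
Qed.
Lemma isd_P3v u v : is_derive (fun t => P3 u t) v (xv3 u v + Cc * (xu3 u v / a)).
Proof.
  unfold P3, Af. auto_derive. auto. unfold xv3, xu3, Af. xalg u.
Qed.

Lemma isd_X3v u v : is_derive (fun t => X3 u t) v (xv3 u v - / 2 * (X2 u v * xv1 u v - X1 u v * xv2 u v)).
Proof.
  apply (isd_ext (fun t => P3 u t + - (X2 u t * X1 u t * / 2)) _ v
     ((xv3 u v + Cc * (xu3 u v / a)) + - ((xv2 u v * X1 u v + X2 u v * xv1 u v) * / 2 + X2 u v * X1 u v * 0))).
  intros; rewrite X3_P3; unfold Rdiv; ring.
  fixeq. rewrite X1_xu3. unfold xv2. field. pose proof a_pos; lra.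
  apply (isd_plus (fun t => P3 u t)). apply isd_P3v.
  apply isd_opp. apply (isd_mult (fun t => X2 u t * X1 u t) (fun _ => / 2)); [|apply isd_const].
  apply (isd_mult (fun t => X2 u t) (fun t => X1 u t)). apply isd_X2v. apply isd_X1v.
Qed.
Definition Xe := X_explicit a th phi beta G.

Lemma X_eq : Xe = fun u v => (X1 u v, X2 u v, X3 u v).
Proof.
  extensionality u; extensionality v. unfold Xe, X_explicit, F_re, F_im, h_fun, Aof.
  rewrite D_G. unfold X1, X2, X3, Af, Cc. reflexivity.
Qed.

Lemma comp1_X : comp1 Xe = X1. Proof. unfold comp1; rewrite X_eq; reflexivity. Qed.
Lemma comp2_X : comp2 Xe = X2. Proof. unfold comp2; rewrite X_eq; reflexivity. Qed.
Lemma comp3_X : comp3 Xe = X3. Proof. unfold comp3; rewrite X_eq; reflexivity. Qed.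

Lemma DX1u u v : Derive (fun t => X1 t v) u = xu1 u v. Proof. apply is_derive_unique, isd_X1u. Qed.
Lemma DX2u u v : Derive (fun t => X2 t v) u = xu2 u v. Proof. apply is_derive_unique, isd_X2u. Qed.
Lemma DX3u u v : Derive (fun t => X3 t v) u = xu3 u v - / 2 * (X2 u v * xu1 u v - X1 u v * xu2 u v).
Proof. apply is_derive_unique, isd_X3u. Qed.
Lemma DX1v u v : Derive (fun t => X1 u t) v = xv1 u v. Proof. apply is_derive_unique, isd_X1v. Qed.
Lemma DX2v u v : Derive (fun t => X2 u t) v = xv2 u v. Proof. apply is_derive_unique, isd_X2v. Qed.
Lemma DX3v u v : Derive (fun t => X3 u t) v = xv3 u v - / 2 * (X2 u v * xv1 u v - X1 u v * xv2 u v).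
Proof. apply is_derive_unique, isd_X3v. Qed.

Lemma Xu_eq u v : Xu Xe u v = (xu1 u v, xu2 u v, xu3 u v).
Proof.
  unfold Xu, frame_coords, pd3_u, pd_u. rewrite comp1_X, comp2_X, comp3_X, X_eq. simpl.
  rewrite DX1u, DX2u, DX3u.
  unfold c1, c2, c3; simpl. f_equal. ring.
Qed.

Lemma Xv_eq u v : Xv Xe u v = (xv1 u v, xv2 u v, xv3 u v).
Proof.
  unfold Xv, frame_coords, pd3_v, pd_v. rewrite comp1_X, comp2_X, comp3_X, X_eq. simpl.
  rewrite DX1v, DX2v, DX3v.
  unfold c1, c2, c3; simpl. f_equal. ring.
Qed.

Definition lam u v := (g1f u ^ 2 + Cc ^ 2) * cosh (Af u v) ^ 2.

Lemma conf1 u v : dot3 (Xu Xe u v) (Xu Xe u v) = lam u v.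
Proof.
  rewrite Xu_eq. unfold dot3, c1, c2, c3, lam, xu1, xu2, xu3; simpl.
  pose proof (sc1' u); pose proof (ch1 (Af u v)). unpow. nsatz.
Qed.
Lemma conf2 u v : dot3 (Xv Xe u v) (Xv Xe u v) = lam u v.
Proof.
  rewrite Xv_eq. unfold dot3, c1, c2, c3, lam, xv1, xv2, xv3; simpl.
  pose proof (sc1' u); pose proof (ch1 (Af u v)). unpow. nsatz.
Qed.
Lemma conf3 u v : dot3 (Xu Xe u v) (Xv Xe u v) = 0.
Proof.
  rewrite Xu_eq, Xv_eq. unfold dot3, c1, c2, c3, xu1, xu2, xu3, xv1, xv2, xv3; simpl. pose proof (sc1' u); pose proof (ch1 (Af u v)). unpow. nsatz.
Qed.

Lemma cosh_pos x : 0 < cosh x.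
Proof. unfold cosh. pose proof (exp_pos x); pose proof (exp_pos (-x)). lra. Qed.

Lemma g1C_pos u : 0 < g1f u ^ 2 + Cc ^ 2.
Proof.
  destruct (Req_dec Cc 0) as [HC|HC].
  - rewrite HC. assert (g1f u <> 0).
    { intro Hg. pose proof (g1_rel u) as E. rewrite Hg, HC in E.
      assert (Hs : sin (2 * th) = 0).
      { unfold Cc, Cconst in HC. pose proof a_pos.
        apply (Rmult_eq_reg_r (/ (2 * a))). rewrite Rmult_0_l. exact HC.
        apply Rinv_neq_0_compat. lra. }
      pose proof (sc1 (2 * th)) as E2. rewrite Hs in E2. unfold kk in E. nra. }
    assert (0 < g1f u ^ 2) by (rewrite <- Rsqr_pow2; apply Rsqr_pos_lt; auto). lra.
  - assert (0 < Cc ^ 2) by (rewrite <- Rsqr_pow2; apply Rsqr_pos_lt; auto). pose proof (pow2_ge_0 (g1f u)). lra.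
Qed.
Ltac smooth := repeat (sstep || tstep || apply T_cphi || apply T_sphi || apply T_g1 || apply T_beta || apply T_G || apply T_pf || apply T_g1).

Lemma S2_X1 n : S2 n X1. Proof. unfold X1, Af. smooth. Qed.
Lemma S2_X2 n : S2 n X2. Proof. unfold X2. smooth. Qed.
Lemma S2_X3 n : S2 n X3. Proof. unfold X3, Af. smooth. Qed.

Definition Nx u v := (sin (phi u) / cosh (Af u v), sinh (Af u v) / cosh (Af u v), cos (phi u) / cosh (Af u v)).

Lemma cross_eq u v : cross3 (Xu Xe u v) (Xv Xe u v) =
  let m := (g1f u ^ 2 + Cc ^ 2) * cosh (Af u v) in
  (m * sin (phi u), m * sinh (Af u v), m * cos (phi u)).
Proof.
  rewrite Xu_eq, Xv_eq. unfold cross3, c1, c2, c3, xu1, xu2, xu3, xv1, xv2, xv3; simpl.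
  pose proof (sc1' u); pose proof (ch1 (Af u v)). unpow. f_equal; [f_equal|]; nsatz.
Qed.

Lemma un_eq u v : unit_normal Xe u v = Nx u v.
Proof.
  unfold unit_normal. rewrite cross_eq. cbv zeta.
  set (m := (g1f u ^ 2 + Cc ^ 2) * cosh (Af u v)).
  pose proof (cosh_pos (Af u v)) as HK. pose proof (g1C_pos u) as Hg.
  assert (Hm : 0 < m) by (unfold m; apply Rmult_lt_0_compat; auto).
  assert (E : dot3 (m * sin (phi u), m * sinh (Af u v), m * cos (phi u)) (m * sin (phi u), m * sinh (Af u v), m * cos (phi u))
     = (m * cosh (Af u v)) ^ 2).
  { unfold dot3, c1, c2, c3; simpl. pose proof (sc1' u); pose proof (ch1 (Af u v)). unpow. nsatz. }
  rewrite E. rewrite <- Rsqr_pow2, sqrt_Rsqr by (apply Rlt_le, Rmult_lt_0_compat; auto).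
  unfold scal3, Nx, c1, c2, c3; simpl. f_equal; [f_equal|]; field; split; lra.
Qed.

Lemma gauss_eq u v : g_den a phi beta u v <> 0 ->
  stereo (g_re a phi beta u v) (g_im a phi beta u v) = Nx u v.
Proof.
  intros Hd. unfold stereo, g_re, g_im, Nx. unfold g_den in *. fold (Af u v) in *.
  unfold Aof in *. fold (Af u v) in *.
  pose proof (cosh_pos (Af u v)) as HK.
  set (d := cos (phi u) + cosh (Af u v)) in *.
  assert (Hq : 1 + (sin (phi u) / d) ^ 2 + (sinh (Af u v) / d) ^ 2 = 2 * cosh (Af u v) / d).
  { field_simplify_eq; auto. pose proof (sc1' u); pose proof (ch1 (Af u v)). unfold d. unpow. nsatz. }
  rewrite Hq. f_equal; [f_equal|].
  1,2: field; split; auto; lra.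
  replace (1 - (sin (phi u) / d) ^ 2 - (sinh (Af u v) / d) ^ 2) with (2 - (1 + (sin (phi u) / d) ^ 2 + (sinh (Af u v) / d) ^ 2)) by ring.
  rewrite Hq. field_simplify_eq. unfold d. ring. split; auto; lra.
Qed.

Definition xu1u u v := g2f u * sin (phi u) * sinh (Af u v) + g1f u * (cos (phi u) * pf u) * sinh (Af u v)
  + g1f u * sin (phi u) * (cosh (Af u v) * (Cc * cos (phi u) ^ 2)) + Cc * (- sin (phi u) * pf u) * cosh (Af u v)
  + Cc * cos (phi u) * (sinh (Af u v) * (Cc * cos (phi u) ^ 2)).
Definition xu2u (u v : R) := - g2f u.
Definition xu3u u v := g2f u * cos (phi u) * sinh (Af u v) + g1f u * (- sin (phi u) * pf u) * sinh (Af u v)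
  + g1f u * cos (phi u) * (cosh (Af u v) * (Cc * cos (phi u) ^ 2)) - Cc * (cos (phi u) * pf u) * cosh (Af u v)
  - Cc * sin (phi u) * (sinh (Af u v) * (Cc * cos (phi u) ^ 2)).
Definition xv1v u v := a * (g1f u * cos (phi u) * sinh (Af u v) - Cc * sin (phi u) * cosh (Af u v)).
Definition xv2v (u v : R) := 0.
Definition xv3v u v := a * (- g1f u * sin (phi u) * sinh (Af u v) - Cc * cos (phi u) * cosh (Af u v)).

Lemma Dxu1u u v : Derive (fun t => xu1 t v) u = xu1u u v.
Proof. apply is_derive_unique. unfold xu1, Af. auto_derive. repeat split; auto using ex_phi, ex_beta, ex_g1.
  rewrite D_phi, D_beta, D_g1. unfold xu1u, Af. fixeq. ring. Qed.
Lemma Dxu2u u v : Derive (fun t => xu2 t v) u = xu2u u v.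
Proof. apply is_derive_unique. unfold xu2. auto_derive. auto using ex_g1.
  rewrite D_g1. unfold xu2u. fixeq. ring. Qed.
Lemma Dxu3u u v : Derive (fun t => xu3 t v) u = xu3u u v.
Proof. apply is_derive_unique. unfold xu3, Af. auto_derive. repeat split; auto using ex_phi, ex_beta, ex_g1.
  rewrite D_phi, D_beta, D_g1. unfold xu3u, Af. fixeq. ring. Qed.
Lemma Dxv1v u v : Derive (fun t => xv1 u t) v = xv1v u v.
Proof. apply is_derive_unique. unfold xv1, Af. auto_derive. auto. unfold xv1v, Af. fixeq. ring. Qed.
Lemma Dxv2v u v : Derive (fun t => xv2 u t) v = xv2v u v.
Proof. apply is_derive_unique. unfold xv2. auto_derive. auto. unfold xv2v. fixeq. ring. Qed.
Lemma Dxv3v u v : Derive (fun t => xv3 u t) v = xv3v u v.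
Proof. apply is_derive_unique. unfold xv3, Af. auto_derive. auto. unfold xv3v, Af. fixeq. ring. Qed.

Lemma Xu_fun : Xu Xe = fun u v => (xu1 u v, xu2 u v, xu3 u v).
Proof. extensionality u; extensionality v; apply Xu_eq. Qed.
Lemma Xv_fun : Xv Xe = fun u v => (xv1 u v, xv2 u v, xv3 u v).
Proof. extensionality u; extensionality v; apply Xv_eq. Qed.

Lemma mc_zero u v : mean_curvature Xe u v = 0.
Proof.
  unfold mean_curvature, cov_u, cov_v, pd3_u, pd3_v, pd_u, pd_v.
  rewrite un_eq. rewrite Xu_fun, Xv_fun. unfold comp1, comp2, comp3, c1, c2, c3; simpl.
  rewrite Dxu1u, Dxu2u, Dxu3u, Dxv1v, Dxv2v, Dxv3v.
  match goal with |- ?A / ?B = 0 => replace A with 0; [unfold Rdiv; ring|] end.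
  unfold add3, nabla_E, dot3, Nx, c1, c2, c3; simpl.
  unfold xu1u, xu2u, xu3u, xv1v, xv2v, xv3v, xu1, xu2, xu3, xv1, xv2, xv3.
  pose proof (ch1 (Af u v)). pose proof (g2c_rel u).
  assert (I2 : 2 * / 2 = 1) by (field; lra). xalg u.
Qed.

Lemma indep3 (x y : vec3) s t L : dot3 x x = L -> dot3 y y = L -> dot3 x y = 0 -> 0 < L ->
  add3 (scal3 s x) (scal3 t y) = (0, 0, 0) -> s = 0 /\ t = 0.
Proof.
  destruct x as [[x1 x2] x3], y as [[y1 y2] y3]. unfold dot3, add3, scal3, c1, c2, c3; simpl.
  intros H1 H2 H3 HL H. injection H as E1 E2 E3.
  assert (Hs : s * L = 0).
  { rewrite <- H1. transitivity (x1 * (s * x1 + t * y1) + x2 * (s * x2 + t * y2) + x3 * (s * x3 + t * y3) - t * (x1 * y1 + x2 * y2 + x3 * y3)); [ring|].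
    rewrite E1, E2, E3, H3; ring. }
  assert (Ht : t * L = 0).
  { rewrite <- H2. transitivity (y1 * (s * x1 + t * y1) + y2 * (s * x2 + t * y2) + y3 * (s * x3 + t * y3) - s * (x1 * y1 + x2 * y2 + x3 * y3)); [ring|].
    rewrite E1, E2, E3, H3; ring. }
  split; [apply (Rmult_eq_reg_r L); lra | apply (Rmult_eq_reg_r L); lra].
Qed.

Lemma lam_pos u v : 0 < lam u v.
Proof. unfold lam. apply Rmult_lt_0_compat. apply g1C_pos. pose proof (cosh_pos (Af u v)). nra. Qed.

Lemma X_cmi : conformal_minimal_immersion Xe.
Proof.
  split; [|split].
  - split; [rewrite comp1_X; apply S2_C2, S2_X1|].
    split; [rewrite comp2_X; apply S2_C2, S2_X2|].
    split; [rewrite comp3_X; apply S2_C2, S2_X3|].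
    intros u v s t H. apply (indep3 _ _ s t (lam u v) (conf1 u v) (conf2 u v) (conf3 u v) (lam_pos u v) H).
  - intros u v. rewrite conf1, conf2, conf3. auto.
  - apply mc_zero.
Qed.

Lemma X_cf u v : conformal_factor Xe u v = ((Derive G u) ^ 2 + Cc ^ 2) * (cosh (Aof a beta u v)) ^ 2.
Proof. unfold conformal_factor. rewrite conf1, D_G. reflexivity. Qed.

Lemma X_gauss : gauss_map_on (fun u v => g_den a phi beta u v <> 0) Xe (g_re a phi beta) (g_im a phi beta).
Proof. intros u v Hd. rewrite un_eq, gauss_eq; auto. Qed.

Lemma gden_S2 : S2 0 (fun u v => g_den a phi beta u v).
Proof. unfold g_den, Aof. smooth. Qed.

Lemma loc_good u v : g_den a phi beta u v <> 0 -> exists d, 0 < d /\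
  (forall t, Rabs (t - u) < d -> g_den a phi beta t v <> 0) /\
  (forall t, Rabs (t - v) < d -> g_den a phi beta u t <> 0).
Proof.
  intros Hn.
  destruct (nz_loc (fun t => g_den a phi beta t v) u (cont2_u _ u v (S2_cont 0 _ gden_S2 u v)) Hn) as [d1 [Hd1 H1]].
  destruct (nz_loc (fun t => g_den a phi beta u t) v (cont2_v _ u v (S2_cont 0 _ gden_S2 u v)) Hn) as [d2 [Hd2 H2]].
  exists (Rmin d1 d2). split. apply Rmin_glb_lt; auto. split.
  - intros t Ht. apply H1. eapply Rlt_le_trans; [exact Ht| apply Rmin_l].
  - intros t Ht. apply H2. eapply Rlt_le_trans; [exact Ht| apply Rmin_r].
Qed.

Lemma exN_u u v : ex_derive (fun t => c1 (Nx t v)) u /\ ex_derive (fun t => c2 (Nx t v)) u /\ ex_derive (fun t => c3 (Nx t v)) u.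
Proof.
  pose proof (cosh_pos (Af u v)). unfold Nx, c1, c2, c3; simpl. unfold Af.
  split; [|split]; auto_derive; repeat split; auto using ex_phi, ex_beta; unfold Af in *; lra.
Qed.
Lemma exN_v u v : ex_derive (fun t => c1 (Nx u t)) v /\ ex_derive (fun t => c2 (Nx u t)) v /\ ex_derive (fun t => c3 (Nx u t)) v.
Proof.
  pose proof (cosh_pos (Af u v)). unfold Nx, c1, c2, c3; simpl. unfold Af.
  split; [|split]; auto_derive; repeat split; auto; unfold Af in *; lra.
Qed.

Lemma Xv_cross u v : Xv Xe u v = cross3 (Nx u v) (Xu Xe u v).
Proof.
  rewrite Xu_eq, Xv_eq. unfold Nx, cross3, xu1, xu2, xu3, xv1, xv2, xv3, xv2, c1, c2, c3; simpl.
  pose proof (cosh_pos (Af u v)) as HK.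
  assert (IK : cosh (Af u v) * / cosh (Af u v) = 1) by (field; lra).
  pose proof (sc1' u); pose proof (ch1 (Af u v)). clear HK. unfold Rdiv. unpow.
  f_equal; [f_equal|]; nsatz.
Qed.

Lemma NN1 u v : dot3 (Nx u v) (Nx u v) = 1.
Proof.
  unfold Nx, dot3, c1, c2, c3; simpl. pose proof (cosh_pos (Af u v)) as HK.
  pose proof (sc1' u); pose proof (ch1 (Af u v)).
  assert (E : sin (phi u) ^ 2 + sinh (Af u v) ^ 2 + cos (phi u) ^ 2 = cosh (Af u v) ^ 2) by lra.
  transitivity ((sin (phi u) ^ 2 + sinh (Af u v) ^ 2 + cos (phi u) ^ 2) / cosh (Af u v) ^ 2); [field; lra|].
  rewrite E. field. lra.
Qed.

Section Uniq.
Variable Y : R -> R -> vec3.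
Hypothesis HYc : conformal_minimal_immersion Y.
Hypothesis HYg : gauss_map_on (fun u v => g_den a phi beta u v <> 0) Y (g_re a phi beta) (g_im a phi beta).

Lemma good_point u v : g_den a phi beta u v <> 0 -> cos (phi u) <> 0 ->
  Xu Y u v = Xu Xe u v /\ Xv Y u v = Xv Xe u v.
Proof.
  intros Hg Hc. destruct (loc_good u v Hg) as [d [Hd [Hlu Hlv]]].
  destruct (exN_u u v) as [Nu1 [Nu2 Nu3]]. destruct (exN_v u v) as [Nv1 [Nv2 Nv3]].
  assert (HYu : forall t, Rabs (t - u) < d -> unit_normal Y t v = Nx t v).
  { intros t Ht. rewrite HYg by auto. apply gauss_eq; auto. }
  assert (HYv : forall t, Rabs (t - v) < d -> unit_normal Y u t = Nx u t).
  { intros t Ht. rewrite HYg by auto. apply gauss_eq; auto. }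
  destruct (surf_eqs Y Nx u v d HYc Nu1 Nu2 Nu3 Nv1 Nv2 Nv3 Hd HYu HYv) as [EY1 EY2].
  destruct (surf_eqs Xe Nx u v d X_cmi Nu1 Nu2 Nu3 Nv1 Nv2 Nv3 Hd (fun t _ => un_eq t v) (fun t _ => un_eq u t)) as [EX1 EX2].
  assert (HN : unit_normal Y u v = Nx u v) by (apply HYu; rewrite Rminus_diag, Rabs_R0; auto).
  pose proof (cmi_Xu_pos Y u v HYc) as Hpos.
  destruct HYc as [_ [Hconf _]]. destruct (Hconf u v) as [Hc1 Hc2].
  assert (Hbv : Xv Y u v = cross3 (Nx u v) (Xu Y u v)).
  { rewrite <- HN. unfold unit_normal. cbv zeta. symmetry. apply cross_conf; auto. }
  assert (Hav : Xu Y u v = Xu Xe u v).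
  { apply (alg_uniq (Xu Y u v) (Xv Y u v) (Xu Xe u v) (Nx u v) (pd3_u Nx u v) (pd3_v Nx u v) (lam u v)).
    - apply NN1.
    - rewrite <- un_eq. exact (proj1 (normal_perp Xe u v)).
    - apply conf1.
    - apply lam_pos.
    - rewrite <- HN. exact (proj1 (normal_perp Y u v)).
    - exact Hbv.
    - intros H0. rewrite H0 in Hpos. unfold dot3, c1, c2, c3 in Hpos; simpl in Hpos. lra.
    - rewrite <- Xv_cross. unfold E1. exact EX1.
    - rewrite <- Xv_cross. unfold E2. exact EX2.
    - unfold E1. exact EY1.
    - unfold E2. exact EY2.
    - rewrite <- Xv_cross.
      change (c1 (Xu Xe u v) * c2 (Xv Xe u v) - c2 (Xu Xe u v) * c1 (Xv Xe u v)) with (c3 (cross3 (Xu Xe u v) (Xv Xe u v))).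
      rewrite cross_eq. unfold Nx, c3; simpl. pose proof (cosh_pos (Af u v)). pose proof (g1C_pos u).
      apply Rmult_integral_contrapositive; split.
      + unfold Rdiv. apply Rmult_integral_contrapositive; split; auto. apply Rinv_neq_0_compat; lra.
      + apply Rmult_integral_contrapositive; split; auto. apply Rmult_integral_contrapositive; split; [|lra].
        simpl in *. lra. }
  split; auto. rewrite Hbv, Hav, Xv_cross. reflexivity.
Qed.


Lemma phi_inj u t : t <> u -> phi t <> phi u.
Proof.
  intros Hne He. destruct (MVT_gen phi u t pf) as [c [_ Hc]].
  - intros; apply isd_phi.
  - intros; eapply isd_cont, isd_phi.
  - rewrite He, Rminus_diag in Hc. pose proof (pf_neg c).
    symmetry in Hc. apply Rmult_integral in Hc. destruct Hc; [lra|]. apply Hne; lra.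
Qed.

Lemma cosh_ge1 x : 1 <= cosh x.
Proof. unfold cosh. rewrite exp_Ropp. pose proof (exp_pos x).
  assert (0 <= (exp x - 1) ^ 2) by apply pow2_ge_0.
  assert (E : (exp x + / exp x) / 2 - 1 = (exp x - 1) ^ 2 / (2 * exp x)) by (field; lra).
  assert (0 <= (exp x - 1) ^ 2 / (2 * exp x)) by (apply Rdiv_le_0_compat; lra). lra.
Qed.

Lemma small_angle d : 0 < Rabs d < PI / 2 -> sin d <> 0 /\ 0 < cos d.
Proof.
  intros [H1 H2]. split.
  - unfold Rabs in *. destruct (Rcase_abs d).
    + assert (0 < sin (- d)) by (apply sin_gt_0; pose proof PI_RGT_0; lra). rewrite sin_neg in H. lra.
    + assert (0 < sin d) by (apply sin_gt_0; pose proof PI_RGT_0; lra). lra.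
  - apply cos_gt_0; unfold Rabs in *; destruct (Rcase_abs d); lra.
Qed.

Lemma good_near u v : exists d, 0 < d /\ forall t, 0 < Rabs (t - u) < d ->
  g_den a phi beta t v <> 0 /\ cos (phi t) <> 0.
Proof.
  assert (Hg : forall t, cos (phi t) <> -1 -> g_den a phi beta t v <> 0).
  { intros t Ht. unfold g_den. pose proof (cosh_ge1 (Aof a beta t v)). pose proof (COS_bound (phi t)). lra. }
  destruct (cont_eps phi u (PI / 2) (T_cont 0 phi (T_phi 0) u) ltac:(pose proof PI_RGT_0; lra)) as [d1 [Hd1 H1]].
  assert (Key : forall t, 0 < Rabs (t - u) < d1 -> 0 < Rabs (phi t - phi u) < PI / 2).
  { intros t Ht. split; [|apply H1; lra]. apply Rabs_pos_lt. intro E. apply (phi_inj u t); [|lra].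
    intro; subst; rewrite Rminus_diag, Rabs_R0 in Ht; lra. }
  set (cu := cos (phi u)). set (su := sin (phi u)).
  assert (Hcs : su ^ 2 + cu ^ 2 = 1) by apply sc1'.
  assert (Hct : forall t, cos (phi t) = cu * cos (phi t - phi u) - su * sin (phi t - phi u)).
  { intros t. replace (phi t) with (phi u + (phi t - phi u)) at 1 by ring. rewrite cos_plus. reflexivity. }
  destruct (Req_dec cu 0) as [Hc0|Hc0].
  - exists d1. split; auto. intros t Ht. destruct (small_angle _ (Key t Ht)) as [Hs Hc].
    assert (Hsu : su ^ 2 = 1) by (rewrite Hc0 in Hcs; lra). rewrite Hct, Hc0.
    pose proof (sc1 (phi t - phi u)) as Hsc.
    assert (Hn0 : 0 * cos (phi t - phi u) - su * sin (phi t - phi u) <> 0).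
    { intro E. assert (Hz : su * sin (phi t - phi u) = 0) by lra. apply Rmult_integral in Hz. destruct Hz as [Hz|Hz]; [|auto].
      rewrite Hz in Hsu. simpl in Hsu. lra. }
    split; auto. apply Hg. rewrite Hct, Hc0. intro E.
    assert (E1' : su * sin (phi t - phi u) = 1) by lra.
    assert (E2 : (su * sin (phi t - phi u)) ^ 2 = 1) by (rewrite E1'; ring).
    rewrite Rpow_mult_distr, Hsu in E2. nra.
  - destruct (Req_dec cu (-1)) as [Hc1|Hc1].
    + exists d1. split; auto. intros t Ht. destruct (small_angle _ (Key t Ht)) as [Hs Hc].
      assert (Hsu : su = 0) by (rewrite Hc1 in Hcs; nra). rewrite Hct, Hc1, Hsu.
      pose proof (sc1 (phi t - phi u)).
      split; [|intro; lra]. apply Hg. rewrite Hct, Hc1, Hsu. intro E.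
      assert (cos (phi t - phi u) = 1) by lra. nra.
    + assert (He : 0 < Rmin (Rabs cu) (Rabs (cu + 1))).
      { apply Rmin_glb_lt; apply Rabs_pos_lt; auto. intro; apply Hc1; lra. }
      destruct (cont_eps (fun t => cos (phi t)) u _ (T_cont 0 _ (T_cphi 0) u) He) as [d2 [Hd2 H2]].
      exists d2. split; auto. intros t Ht. specialize (H2 t ltac:(lra)). simpl in H2.
      fold cu in H2. pose proof (Rmin_l (Rabs cu) (Rabs (cu + 1))). pose proof (Rmin_r (Rabs cu) (Rabs (cu + 1))).
      split.
      * apply Hg. intro E. rewrite E in H2. replace (-1 - cu) with (- (cu + 1)) in H2 by ring.
        rewrite Rabs_Ropp in H2. lra.
      * intro E. rewrite E in H2. rewrite Rminus_0_l, Rabs_Ropp in H2. lra.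
Qed.


Lemma cpd_u f (Hf : C2_2d f) u v : continuity_pt (fun t => pd_u f t v) u.
Proof. apply cont2_u. apply continuity_2d_pt_filterlim. destruct Hf as [H _]. apply (H u v). Qed.
Lemma cpd_v f (Hf : C2_2d f) u v : continuity_pt (fun t => pd_v f t v) u.
Proof. apply cont2_u. apply continuity_2d_pt_filterlim. destruct Hf as [H _]. apply (H u v). Qed.
Lemma cpd_0 f (Hf : C2_2d f) u v : continuity_pt (fun t => f t v) u.
Proof. eapply isd_cont. apply Derive_correct. exact (exu _ Hf u v). Qed.

Lemma cS2 f (Hf : S2 0 f) u v : continuity_pt (fun t => f t v) u.
Proof. apply cont2_u. apply Hf. Qed.

Lemma S2_xu1 : S2 0 xu1. Proof. unfold xu1, Af. smooth. Qed.
Lemma S2_xu2 : S2 0 xu2. Proof. unfold xu2. smooth. Qed.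
Lemma S2_xu3 : S2 0 xu3. Proof. unfold xu3, Af. smooth. Qed.
Lemma S2_xv1 : S2 0 xv1. Proof. unfold xv1, Af. smooth. Qed.
Lemma S2_xv2 : S2 0 xv2. Proof. unfold xv2. smooth. Qed.
Lemma S2_xv3 : S2 0 xv3. Proof. unfold xv3, Af. smooth. Qed.

Lemma ext_line (F F' : R -> R -> R) : (forall u v, continuity_pt (fun t => F t v) u) ->
  (forall u v, continuity_pt (fun t => F' t v) u) ->
  (forall u v, g_den a phi beta u v <> 0 -> cos (phi u) <> 0 -> F u v = F' u v) -> forall u v, F u v = F' u v.
Proof.
  intros HF HF2 H u v. apply (dens (fun t => F t v) (fun t => F' t v) u); auto.
  destruct (good_near u v) as [d [Hd Hn]]. exists d. split; auto. intros t Ht. destruct (Hn t Ht); auto.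
Qed.

Lemma YC2 : C2_2d (comp1 Y) /\ C2_2d (comp2 Y) /\ C2_2d (comp3 Y).
Proof. destruct HYc as [[H1 [H2 [H3 _]]] _]. auto. Qed.

Lemma I1u u v : pd_u (comp1 Y) u v = xu1 u v.
Proof.
  destruct YC2 as [H1 [H2 H3]]. revert u v. apply ext_line.
  - intros; apply cpd_u; auto.
  - intros; apply cS2, S2_xu1.
  - intros u v Hg Hc. destruct (good_point u v Hg Hc) as [E _]. apply (f_equal c1) in E.
    rewrite Xu_eq in E. exact E.
Qed.
Lemma I2u u v : pd_u (comp2 Y) u v = xu2 u v.
Proof.
  destruct YC2 as [H1 [H2 H3]]. revert u v. apply ext_line.
  - intros; apply cpd_u; auto.
  - intros; apply cS2, S2_xu2.
  - intros u v Hg Hc. destruct (good_point u v Hg Hc) as [E _]. apply (f_equal c2) in E.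
    rewrite Xu_eq in E. exact E.
Qed.
Lemma I1v u v : pd_v (comp1 Y) u v = xv1 u v.
Proof.
  destruct YC2 as [H1 [H2 H3]]. revert u v. apply ext_line.
  - intros; apply cpd_v; auto.
  - intros; apply cS2, S2_xv1.
  - intros u v Hg Hc. destruct (good_point u v Hg Hc) as [_ E]. apply (f_equal c1) in E.
    rewrite Xv_eq in E. exact E.
Qed.
Lemma I2v u v : pd_v (comp2 Y) u v = xv2 u v.
Proof.
  destruct YC2 as [H1 [H2 H3]]. revert u v. apply ext_line.
  - intros; apply cpd_v; auto.
  - intros; apply cS2, S2_xv2.
  - intros u v Hg Hc. destruct (good_point u v Hg Hc) as [_ E]. apply (f_equal c2) in E.
    rewrite Xv_eq in E. exact E.
Qed.
Lemma I3u u v : pd_u (comp3 Y) u v + / 2 * (comp2 Y u v * pd_u (comp1 Y) u v - comp1 Y u v * pd_u (comp2 Y) u v) = xu3 u v.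
Proof.
  destruct YC2 as [H1 [H2 H3]]. revert u v.
  apply (ext_line (fun u v => pd_u (comp3 Y) u v + / 2 * (comp2 Y u v * pd_u (comp1 Y) u v - comp1 Y u v * pd_u (comp2 Y) u v))).
  - intros u v. apply (continuity_pt_plus (fun t => pd_u (comp3 Y) t v)). apply cpd_u; auto.
    apply (continuity_pt_mult (fun _ => / 2)). apply continuity_pt_const; intros ? ?; reflexivity.
    apply (continuity_pt_minus (fun t => comp2 Y t v * pd_u (comp1 Y) t v)).
    apply (continuity_pt_mult (fun t => comp2 Y t v)); [apply cpd_0|apply cpd_u]; auto.
    apply (continuity_pt_mult (fun t => comp1 Y t v)); [apply cpd_0|apply cpd_u]; auto.
  - intros; apply cS2, S2_xu3.
  - intros u v Hg Hc. destruct (good_point u v Hg Hc) as [E _]. apply (f_equal c3) in E.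
    rewrite Xu_eq in E. exact E.
Qed.
Lemma I3v u v : pd_v (comp3 Y) u v + / 2 * (comp2 Y u v * pd_v (comp1 Y) u v - comp1 Y u v * pd_v (comp2 Y) u v) = xv3 u v.
Proof.
  destruct YC2 as [H1 [H2 H3]]. revert u v.
  apply (ext_line (fun u v => pd_v (comp3 Y) u v + / 2 * (comp2 Y u v * pd_v (comp1 Y) u v - comp1 Y u v * pd_v (comp2 Y) u v))).
  - intros u v. apply (continuity_pt_plus (fun t => pd_v (comp3 Y) t v)). apply cpd_v; auto.
    apply (continuity_pt_mult (fun _ => / 2)). apply continuity_pt_const; intros ? ?; reflexivity.
    apply (continuity_pt_minus (fun t => comp2 Y t v * pd_v (comp1 Y) t v)).
    apply (continuity_pt_mult (fun t => comp2 Y t v)); [apply cpd_0|apply cpd_v]; auto.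
    apply (continuity_pt_mult (fun t => comp1 Y t v)); [apply cpd_0|apply cpd_v]; auto.
  - intros; apply cS2, S2_xv3.
  - intros u v Hg Hc. destruct (good_point u v Hg Hc) as [_ E]. apply (f_equal c3) in E.
    rewrite Xv_eq in E. exact E.
Qed.


Lemma Y_translate : exists p, forall u v, Y u v = nil_mul p (Xe u v).
Proof.
  destruct YC2 as [H1 [H2 H3]].
  set (p1 := comp1 Y 0 0 - X1 0 0). set (p2 := comp2 Y 0 0 - X2 0 0).
  assert (F1 : forall u v, comp1 Y u v - X1 u v = p1).
  { apply (const2 (fun u v => comp1 Y u v - X1 u v)).
    - intros u v. apply (isd_ext (fun t => comp1 Y t v + - X1 t v) _ u (pd_u (comp1 Y) u v + - xu1 u v)).
      intros; ring. rewrite I1u; fixeq; ring.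
      apply (isd_plus (fun t => comp1 Y t v)). apply Derive_correct, (exu _ H1). apply isd_opp, isd_X1u.
    - intros u v. apply (isd_ext (fun t => comp1 Y u t + - X1 u t) _ v (pd_v (comp1 Y) u v + - xv1 u v)).
      intros; ring. rewrite I1v; fixeq; ring.
      apply (isd_plus (fun t => comp1 Y u t)). apply Derive_correct, (exv _ H1). apply isd_opp, isd_X1v. }
  assert (F2 : forall u v, comp2 Y u v - X2 u v = p2).
  { apply (const2 (fun u v => comp2 Y u v - X2 u v)).
    - intros u v. apply (isd_ext (fun t => comp2 Y t v + - X2 t v) _ u (pd_u (comp2 Y) u v + - xu2 u v)).
      intros; ring. rewrite I2u; fixeq; ring.
      apply (isd_plus (fun t => comp2 Y t v)). apply Derive_correct, (exu _ H2). apply isd_opp, isd_X2u.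
    - intros u v. apply (isd_ext (fun t => comp2 Y u t + - X2 u t) _ v (pd_v (comp2 Y) u v + - xv2 u v)).
      intros; ring. rewrite I2v; fixeq; ring.
      apply (isd_plus (fun t => comp2 Y u t)). apply Derive_correct, (exv _ H2). apply isd_opp, isd_X2v. }
  set (f3 := fun u v => comp3 Y u v + - (X3 u v + / 2 * (p1 * X2 u v - p2 * X1 u v))).
  set (p3 := f3 0 0).
  assert (F3 : forall u v, f3 u v = p3).
  { apply const2.
    - intros u v. unfold f3.
      apply (isd_ext (fun t => comp3 Y t v + - (X3 t v + / 2 * (p1 * X2 t v - p2 * X1 t v))) _ u
        (pd_u (comp3 Y) u v + - ((xu3 u v - / 2 * (X2 u v * xu1 u v - X1 u v * xu2 u v))
           + / 2 * (p1 * xu2 u v - p2 * xu1 u v)))).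
      intros; reflexivity.
      { fixeq. pose proof (I3u u v) as E. rewrite I1u, I2u in E.
        replace (comp2 Y u v) with (X2 u v + p2) in E by (rewrite <- (F2 u v); ring).
        replace (comp1 Y u v) with (X1 u v + p1) in E by (rewrite <- (F1 u v); ring).
        lra. }
      apply (isd_plus (fun t => comp3 Y t v)). apply Derive_correct, (exu _ H3).
      apply isd_opp. apply (isd_plus (fun t => X3 t v)). apply isd_X3u.
      apply (isd_ext (fun t => / 2 * (p1 * X2 t v + - (p2 * X1 t v))) _ u (/ 2 * (p1 * xu2 u v + - (p2 * xu1 u v)))).
      intros; ring. fixeq; ring.
      apply (is_derive_scal (fun t => p1 * X2 t v + - (p2 * X1 t v))).
      apply (isd_plus (fun t => p1 * X2 t v)). apply (is_derive_scal (fun t => X2 t v)), isd_X2u.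
      apply isd_opp, (is_derive_scal (fun t => X1 t v)), isd_X1u.
    - intros u v. unfold f3.
      apply (isd_ext (fun t => comp3 Y u t + - (X3 u t + / 2 * (p1 * X2 u t - p2 * X1 u t))) _ v
        (pd_v (comp3 Y) u v + - ((xv3 u v - / 2 * (X2 u v * xv1 u v - X1 u v * xv2 u v))
           + / 2 * (p1 * xv2 u v - p2 * xv1 u v)))).
      intros; reflexivity.
      { fixeq. pose proof (I3v u v) as E. rewrite I1v, I2v in E.
        replace (comp2 Y u v) with (X2 u v + p2) in E by (rewrite <- (F2 u v); ring).
        replace (comp1 Y u v) with (X1 u v + p1) in E by (rewrite <- (F1 u v); ring).
        lra. }
      apply (isd_plus (fun t => comp3 Y u t)). apply Derive_correct, (exv _ H3).
      apply isd_opp. apply (isd_plus (fun t => X3 u t)). apply isd_X3v.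
      apply (isd_ext (fun t => / 2 * (p1 * X2 u t + - (p2 * X1 u t))) _ v (/ 2 * (p1 * xv2 u v + - (p2 * xv1 u v)))).
      intros; ring. fixeq; ring.
      apply (is_derive_scal (fun t => p1 * X2 u t + - (p2 * X1 u t))).
      apply (isd_plus (fun t => p1 * X2 u t)). apply (is_derive_scal (fun t => X2 u t)), isd_X2v.
      apply isd_opp, (is_derive_scal (fun t => X1 u t)), isd_X1v. }
  exists (p1, p2, p3). intros u v. rewrite X_eq.
  specialize (F1 u v). specialize (F2 u v). specialize (F3 u v). unfold f3 in F3.
  unfold nil_mul, c1, c2, c3 in *; simpl.
  unfold comp1, comp2, comp3, c1, c2, c3 in F1, F2, F3.
  destruct (Y u v) as [[y1 y2] y3]; simpl in *.
  f_equal; [f_equal|]; lra.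
Qed.

End Uniq.



End PhiSec.


Theorem proposition5p1 (alpha theta : R) (phi beta G : R -> R) :
  in_Omega alpha theta ->
  (* phi'^2 = P(cos phi), phi(0) = 0, phi'(0) <= 0 *)
  (forall u, ex_derive phi u) ->
  (forall u, (Derive phi u) ^ 2 = Ppoly alpha theta (cos (phi u))) ->
  phi 0 = 0 -> Derive phi 0 <= 0 ->
  (* beta' = C cos^2 phi, beta(0) = 0 *)
  (forall u, is_derive beta u (Cconst alpha theta * (cos (phi u)) ^ 2)) ->
  beta 0 = 0 ->
  (* G' = (C^2 cos^2 phi - cos 2theta) / (alpha - phi'), G(0) = 0 *)
  (forall u, is_derive G u
     (((Cconst alpha theta) ^ 2 * (cos (phi u)) ^ 2 - cos (2 * theta))
      / (alpha - Derive phi u))) ->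
  G 0 = 0 ->
  let X := X_explicit alpha theta phi beta G in
  let D := fun u v => g_den alpha phi beta u v <> 0 in
  let gre := g_re alpha phi beta in
  let gim := g_im alpha phi beta in
  (* X = (F,h) is a conformal minimal immersion with Gauss map g ... *)
  conformal_minimal_immersion X /\
  gauss_map_on D X gre gim /\
  (* ... whose metric is ds^2 = (G'^2 + C^2) cosh^2 A |dz|^2 ... *)
  (forall u v, conformal_factor X u v
     = ((Derive G u) ^ 2 + (Cconst alpha theta) ^ 2) * (cosh (Aof alpha beta u v)) ^ 2) /\
  (* ... and every conformal minimal immersion C -> Nil_3 with Gauss map g
     is a left translate of X. *)
  (forall Y : R -> R -> vec3,
     conformal_minimal_immersion Y -> gauss_map_on D Y gre gim ->
     exists p : vec3, forall u v, Y u v = nil_mul p (X u v)).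
Proof.
  intros HO Hpd Hpeq Hp0 Hp0' Hb Hb0 HG HG0 X D gre gim.
  split; [|split; [|split]].
  - eapply X_cmi; eauto.
  - eapply X_gauss; eauto.
  - intros u v. eapply X_cf; eauto.
  - intros Y HYc HYg. eapply Y_translate; eauto.
Qed.
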